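(* Let $N\ge1$ and $\gamma=(\gamma_\ell)_{-N\le\ell\le N}\in\mathbb{C}^{2N+1}$ be fixed, and for $\varepsilon>0$ let $\Box_\varepsilon\in\mathcal O_{N,\varepsilon}$ be the operator with coefficients $c_\ell=\gamma_\ell/\varepsilon$. The following six properties are equivalent (all limits are as $\varepsilon\to0^+$, and ''locally uniformly in $]a,b[$'' means uniformly on $[a+\delta,b-\delta]$ for every $\delta>0$): (a) D.E.L. converges to C.E.L.: for all smooth $P,Q,R:[a,b]\to\mathbb{R}^{d\times d}$ with $P,Q$ symmetric and $R$ skew-symmetric, all smooth $J_1,J_2:[a,b]\to\mathbb{R}^d$, and all $\mathbf x\in\mathcal C^2([a,b],\mathbb{R}^d)$, $\Theta(\mathbf x)\to-P\ddot{\mathbf x}+(-\dot P+2R)\dot{\mathbf x}+(\dot R+Q)\mathbf x-\dot J_1+J_2$ locally uniformly in $]a,b[$; (b) for all $\mathbf x\in\mathcal C^2([a,b],\mathbb{R}^d)$, $\Box_\varepsilon\mathbf x\to\dot{\mathbf x}$ locally uniformly in $]a,b[$; (c) for all $\mathbf x\in\mathcal C^2([a,b],\mathbb{R}^d)$, $\Box_{-\varepsilon}\mathbf x\to-\dot{\mathbf x}$ locally uniformly in $]a,b[$; (d) the functions $t\mapsto\Box_\varepsilon1$ and $t\mapsto\Box_\varepsilon t$ converge respectively to $0$ and $1$ locally uniformly in $]a,b[$; (e) $\Box_\varepsilon\in\tilde{\mathcal O}_{N,\varepsilon}$, i.e. $\sum_{\ell=-N}^N\gamma_\ell=0$ and $\sum_{\ell=-N}^N\ell\gamma_\ell=1$;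 (f) there exist $k_1,\dots,k_{2N-1}\in\mathbb{C}$ such that $\Box_\varepsilon\mathbf x(t)=\Box^{[1,0]}_\varepsilon\mathbf x(t)+\sum_{\ell=-(N-1)}^{N-1}k_{\ell+N}\,\Box^{[1,-1]}_\varepsilon\mathbf x(t-\ell\varepsilon)$ for all $\mathbf x$ and all $t$ in the safety interval $[a+2N\varepsilon,b-2N\varepsilon]$ (equivalently, the coefficient vector $\gamma$ equals that of the forward difference, $\gamma_0=-1,\gamma_1=1$, plus $\sum_{\ell}k_{\ell+N}$ times the vector with entries $1,-2,1$ at indices $-\ell-1,-\ell,-\ell+1$).
   Context: Fix $[a,b]$. For $\varepsilon>0$ and each integer $\ell$, $\chi_\ell$ is the indicator function of $[\max(a,a+\ell\varepsilon),\min(b,b+\ell\varepsilon)]$; a term multiplied by a vanishing characteristic function is $0$. Given coefficients $(c_\ell)_{-N\le\ell\le N}$, $\Box_\varepsilon\mathbf x(t)=\sum_{\ell=-N}^{N}c_\ell\,\mathbf x(t+\ell\varepsilon)\chi_{-\ell}(t)$ (componentwise) and $\Box_{-\varepsilon}\mathbf f(t)=\sum_{\ell=-N}^{N}c_\ell\,\mathbf f(t-\ell\varepsilon)\chi_{\ell}(t)$ (same coefficients). $\mathcal O_{N,\varepsilon}$ is the set of such operators with $c_\ell=\gamma_\ell/\varepsilon$, $\gamma_\ell\in\mathbb{C}$ independent of $\varepsilon$; $\tilde{\mathcal O}_{N,\varepsilon}\subset\mathcal O_{N,\varepsilon}$ consists of those with $\Box_\varepsilon1=0$ and $\Box_\varepsilon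 t=1$ for $t$ in the safety interval $[a+2N\varepsilon,b-2N\varepsilon]$. For $r,s\in\mathbb{C}$, $\Box^{[r,s]}_\varepsilon\mathbf x(t)=-\chi_{1}(t)\frac{s}{\varepsilon}\mathbf x(t-\varepsilon)+\frac{s-r}{\varepsilon}\mathbf x(t)+\chi_{-1}(t)\frac{r}{\varepsilon}\mathbf x(t+\varepsilon)$. For matrix/vector functions $P,Q,R,J_1,J_2$ on $[a,b]$ and $\mathbf x:[a,b]\to\mathbb{R}^d$, \[ \Theta(\mathbf x)(t)=\Box_{-\varepsilon}(P\,\Box_\varepsilon\mathbf x)(t)-\Box_{-\varepsilon}(R\mathbf x)(t)+R(t)\Box_\varepsilon\mathbf x(t)+Q(t)\mathbf x(t)+\Box_{-\varepsilon}J_1(t)+J_2(t), \] the left-hand side of the discrete Euler–Lagrange equation of the quadratic lagrangian $\frac12{}^t\dot{\mathbf x}P\dot{\mathbf x}+\frac12{}^t\mathbf xQ\mathbf x+{}^t\mathbf xR\dot{\mathbf x}+{}^tJ_1\dot{\mathbf x}+{}^tJ_2\mathbf x+J_3$ (${}^t$ denotes transpose). *)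

(* Defs.v *)
From Stdlib Require Export Reals ZArith.
Open Scope R_scope.

Record Cplx := mkC { Re : R ; Im : R }.
Definition C0 : Cplx := mkC 0 0.
Definition RtoC (x : R) : Cplx := mkC x 0.
Definition Cadd (z w : Cplx) : Cplx := mkC (Re z + Re w) (Im z + Im w).
Definition Copp (z : Cplx) : Cplx := mkC (- Re z) (- Im z).
Definition Csub (z w : Cplx) : Cplx := Cadd z (Copp w).
Definition Cmul (z w : Cplx) : Cplx :=
  mkC (Re z * Re w - Im z * Im w) (Re z * Im w + Im z * Re w).
Definition Cnorm (z : Cplx) : R := sqrt (Re z ^ 2 + Im z ^ 2).

Fixpoint Csum (n : nat) (f : nat -> Cplx) : Cplx :=
  match n with O => C0 | S m => Cadd (Csum m f) (f m) end.
Fixpoint Rsum (n : nat) (f : nat -> R) : R :=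
  match n with O => 0 | S m => Rsum m f + f m end.
Definition CsumZ (N : nat) (f : Z -> Cplx) : Cplx :=
  Csum (2 * N + 1)%nat (fun k => f (Z.of_nat k - Z.of_nat N)%Z).

Definition chi (a b eps : R) (l : Z) (t : R) : R :=
  if Rle_dec (Rmax a (a + IZR l * eps)) t then
    if Rle_dec t (Rmin b (b + IZR l * eps)) then 1 else 0
  else 0.

Definition boxC (a b : R) (N : nat) (g : Z -> Cplx) (eps : R) (f : R -> Cplx) (t : R) : Cplx :=
  CsumZ N (fun l => Cmul (Cmul (g l) (RtoC (/ eps)))
                         (Cmul (f (t + IZR l * eps)) (RtoC (chi a b eps (- l)%Z t)))).
Definition boxmC (a b : R) (N : nat) (g : Z -> Cplx) (eps : R) (f : R -> Cplx) (t : R) : Cplx :=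
  CsumZ N (fun l => Cmul (Cmul (g l) (RtoC (/ eps)))
                         (Cmul (f (t - IZR l * eps)) (RtoC (chi a b eps l t)))).
Definition boxrs (a b : R) (r s : Cplx) (eps : R) (f : R -> Cplx) (t : R) : Cplx :=
  Cadd (Cadd
    (Copp (Cmul (RtoC (chi a b eps 1 t)) (Cmul (Cmul s (RtoC (/ eps))) (f (t - eps)))))
    (Cmul (Cmul (Csub s r) (RtoC (/ eps))) (f t)))
    (Cmul (RtoC (chi a b eps (-1) t)) (Cmul (Cmul r (RtoC (/ eps))) (f (t + eps)))).

Definition mvC (d : nat) (M : nat -> nat -> R) (v : nat -> Cplx) (i : nat) : Cplx :=
  Csum d (fun j => Cmul (RtoC (M i j)) (v j)).
Definition mvR (d : nat) (M : nat -> nat -> R) (v : nat -> R) (i : nat) : R :=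
  Rsum d (fun j => M i j * v j).

Definition Theta (d : nat) (a b : R) (N : nat) (g : Z -> Cplx) (eps : R)
  (P Q Rm : R -> nat -> nat -> R) (J1 J2 : R -> nat -> R) (x : R -> nat -> R)
  (t : R) (i : nat) : Cplx :=
  let bx := fun s j => boxC a b N g eps (fun u => RtoC (x u j)) s in
  Cadd (Cadd (Cadd (Cadd (Cadd
    (boxmC a b N g eps (fun s => mvC d (P s) (bx s) i) t)
    (Copp (boxmC a b N g eps (fun s => RtoC (mvR d (Rm s) (x s) i)) t)))
    (mvC d (Rm t) (bx t) i))
    (RtoC (mvR d (Q t) (x t) i)))
    (boxmC a b N g eps (fun s => RtoC (J1 s i)) t))
    (RtoC (J2 t i)).

Definition loc_unif_cv (a b : R) (F : R -> R -> Cplx) (G : R -> Cplx) : Prop :=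
  forall delta, 0 < delta -> forall eta, 0 < eta ->
  exists eps0, 0 < eps0 /\
    forall eps t, 0 < eps < eps0 -> a + delta <= t <= b - delta ->
      Cnorm (Csub (F eps t) (G t)) < eta.

Definition smooth (f : R -> R) : Prop :=
  exists D : nat -> R -> R, D O = f /\
    forall k t, derivable_pt_lim (D k) t (D (S k) t).

Definition C2_with (f f1 f2 : R -> R) : Prop :=
  (forall t, derivable_pt_lim f t (f1 t)) /\
  (forall t, derivable_pt_lim f1 t (f2 t)) /\ continuity f2.

Definition prop_a (d : nat) (a b : R) (N : nat) (g : Z -> Cplx) : Prop :=
  forall (P Q Rm P' Rm' : R -> nat -> nat -> R) (J1 J2 J1' : R -> nat -> R)
         (x x1 x2 : R -> nat -> R),
  (forall i j, (i < d)%nat -> (j < d)%nat ->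
     smooth (fun t => P t i j) /\ smooth (fun t => Q t i j) /\
     smooth (fun t => Rm t i j) /\
     (forall t, derivable_pt_lim (fun s => P s i j) t (P' t i j)) /\
     (forall t, derivable_pt_lim (fun s => Rm s i j) t (Rm' t i j)) /\
     (forall t, P t i j = P t j i) /\ (forall t, Q t i j = Q t j i) /\
     (forall t, Rm t i j = - Rm t j i)) ->
  (forall i, (i < d)%nat ->
     smooth (fun t => J1 t i) /\ smooth (fun t => J2 t i) /\
     (forall t, derivable_pt_lim (fun s => J1 s i) t (J1' t i)) /\
     C2_with (fun t => x t i) (fun t => x1 t i) (fun t => x2 t i)) ->
  forall i, (i < d)%nat ->
    loc_unif_cv a b
      (fun eps t => Theta d a b N g eps P Q Rm J1 J2 x t i)
      (fun t => RtoC (- mvR d (P t) (x2 t) i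
                      + mvR d (fun k l => - P' t k l + 2 * Rm t k l) (x1 t) i
                      + mvR d (fun k l => Rm' t k l + Q t k l) (x t) i
                      - J1' t i + J2 t i)).

Definition prop_b (d : nat) (a b : R) (N : nat) (g : Z -> Cplx) : Prop :=
  forall (x x1 x2 : R -> nat -> R),
  (forall i, (i < d)%nat -> C2_with (fun t => x t i) (fun t => x1 t i) (fun t => x2 t i)) ->
  forall i, (i < d)%nat ->
    loc_unif_cv a b (fun eps t => boxC a b N g eps (fun s => RtoC (x s i)) t)
                    (fun t => RtoC (x1 t i)).

Definition prop_c (d : nat) (a b : R) (N : nat) (g : Z -> Cplx) : Prop :=
  forall (x x1 x2 : R -> nat -> R),
  (forall i, (i < d)%nat -> C2_with (fun t => x t i) (fun t => x1 t i) (fun t => x2 t i)) ->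
  forall i, (i < d)%nat ->
    loc_unif_cv a b (fun eps t => boxmC a b N g eps (fun s => RtoC (x s i)) t)
                    (fun t => RtoC (- x1 t i)).

Definition prop_d (a b : R) (N : nat) (g : Z -> Cplx) : Prop :=
  loc_unif_cv a b (fun eps t => boxC a b N g eps (fun _ => RtoC 1) t) (fun _ => C0) /\
  loc_unif_cv a b (fun eps t => boxC a b N g eps (fun s => RtoC s) t) (fun _ => RtoC 1).

Definition prop_e (N : nat) (g : Z -> Cplx) : Prop :=
  CsumZ N g = C0 /\ CsumZ N (fun l => Cmul (RtoC (IZR l)) (g l)) = RtoC 1.

Definition prop_f (d : nat) (a b : R) (N : nat) (g : Z -> Cplx) : Prop :=
  exists k : Z -> Cplx,
  forall eps, 0 < eps ->
  forall (x : R -> nat -> R) (i : nat) (t : R), (i < d)%nat ->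
    a + 2 * INR N * eps <= t <= b - 2 * INR N * eps ->
    boxC a b N g eps (fun s => RtoC (x s i)) t =
    Cadd (boxrs a b (RtoC 1) (RtoC 0) eps (fun s => RtoC (x s i)) t)
         (CsumZ (N - 1) (fun l => Cmul (k (l + Z.of_nat N)%Z)
            (boxrs a b (RtoC 1) (RtoC (-1)) eps (fun s => RtoC (x s i))
                   (t - IZR l * eps)))).

(* Main.v *)
Require Import Defs.
From Stdlib Require Import Reals ZArith Lra Lia.
Open Scope R_scope.

Lemma Cext (z w : Cplx) : Re z = Re w -> Im z = Im w -> z = w.
Proof. destruct z, w; simpl; intros; subst; reflexivity. Qed.

Lemma Re_Csum n f : Re (Csum n f) = Rsum n (fun k => Re (f k)).
Proof. induction n; simpl; [reflexivity| rewrite IHn; reflexivity]. Qed.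
Lemma Im_Csum n f : Im (Csum n f) = Rsum n (fun k => Im (f k)).
Proof. induction n; simpl; [reflexivity| rewrite IHn; reflexivity]. Qed.

Lemma Rsum_ext n f g : (forall k, (k < n)%nat -> f k = g k) -> Rsum n f = Rsum n g.
Proof. induction n; intros H; simpl; auto. rewrite IHn by (intros; apply H; lia). rewrite H by lia. auto. Qed.
Lemma Rsum_plus n f g : Rsum n (fun k => f k + g k) = Rsum n f + Rsum n g.
Proof. induction n; simpl; [lra| rewrite IHn; lra]. Qed.
Lemma Rsum_minus n f g : Rsum n (fun k => f k - g k) = Rsum n f - Rsum n g.
Proof. induction n; simpl; [lra| rewrite IHn; lra]. Qed.
Lemma Rsum_scal n c f : Rsum n (fun k => c * f k) = c * Rsum n f.
Proof. induction n; simpl; [lra| rewrite IHn; lra]. Qed.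
Lemma Rsum_0 n : Rsum n (fun _ => 0) = 0.
Proof. induction n; simpl; [lra| rewrite IHn; lra]. Qed.
Lemma Rsum_0' n f : (forall k, (k < n)%nat -> f k = 0) -> Rsum n f = 0.
Proof. intros H; rewrite (Rsum_ext n f (fun _ => 0)) by auto; apply Rsum_0. Qed.
Lemma Rsum_abs n f : Rabs (Rsum n f) <= Rsum n (fun k => Rabs (f k)).
Proof. induction n; simpl. rewrite Rabs_R0; lra.
  eapply Rle_trans; [apply Rabs_triang|lra]. Qed.
Lemma Rsum_le n f g : (forall k, (k < n)%nat -> f k <= g k) -> Rsum n f <= Rsum n g.
Proof. induction n; intros H; simpl; [lra|]. assert (f n <= g n) by (apply H; lia).
  assert (Rsum n f <= Rsum n g) by (apply IHn; intros; apply H; lia). lra. Qed.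
Lemma Rsum_ge0 n f : (forall k, (k < n)%nat -> 0 <= f k) -> 0 <= Rsum n f.
Proof. intros H. rewrite <- (Rsum_0 n). apply Rsum_le; auto. Qed.
Lemma Rsum_comm n m (F : nat -> nat -> R) :
  Rsum n (fun k => Rsum m (fun j => F k j)) = Rsum m (fun j => Rsum n (fun k => F k j)).
Proof. induction n; simpl. rewrite Rsum_0; auto.
  rewrite IHn, <- Rsum_plus; auto. Qed.
Lemma Rsum_Sl n f : Rsum (S n) f = f 0%nat + Rsum n (fun k => f (S k)).
Proof. induction n; simpl in *. lra. rewrite IHn. lra. Qed.
Lemma Rsum_rev n f : Rsum n (fun k => f (n - 1 - k)%nat) = Rsum n f.
Proof. induction n. reflexivity.
  rewrite Rsum_Sl. replace (S n - 1 - 0)%nat with n by lia.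
  rewrite (Rsum_ext n _ (fun k => f (n - 1 - k)%nat)) by (intros; f_equal; lia).
  rewrite IHn. simpl. lra. Qed.
Lemma Rsum_trunc n k f : (k <= n)%nat ->
  Rsum n (fun j => if (j <? k)%nat then f j else 0) = Rsum k f.
Proof. induction n; intros H.
  - assert (k = 0)%nat by lia; subst; reflexivity.
  - destruct (Nat.eq_dec k (S n)).
    + subst. apply Rsum_ext. intros j Hj. destruct (Nat.ltb_spec j (S n)); lia || auto.
    + simpl. rewrite IHn by lia. destruct (Nat.ltb_spec n k); [lia|lra]. Qed.

Lemma Cnorm_le (z : Cplx) : Cnorm z <= Rabs (Re z) + Rabs (Im z).
Proof. unfold Cnorm. rewrite <- (sqrt_pow2 (Rabs (Re z) + Rabs (Im z))).
  2: pose proof (Rabs_pos (Re z)); pose proof (Rabs_pos (Im z)); lra.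
  apply sqrt_le_1_alt. pose proof (Rabs_pos (Re z)); pose proof (Rabs_pos (Im z)).
  assert (Re z ^ 2 = Rabs (Re z) ^ 2) by (rewrite <- !Rsqr_pow2; apply Rsqr_abs).
  assert (Im z ^ 2 = Rabs (Im z) ^ 2) by (rewrite <- !Rsqr_pow2; apply Rsqr_abs).
  nra. Qed.
Lemma Re_le_Cnorm (z : Cplx) : Rabs (Re z) <= Cnorm z.
Proof. unfold Cnorm. rewrite <- sqrt_Rsqr_abs. apply sqrt_le_1_alt. unfold Rsqr. nra. Qed.
Lemma Im_le_Cnorm (z : Cplx) : Rabs (Im z) <= Cnorm z.
Proof. unfold Cnorm. rewrite <- sqrt_Rsqr_abs. apply sqrt_le_1_alt. unfold Rsqr. nra. Qed.
Definition rluc (a b : R) (F : R -> R -> R) (G : R -> R) : Prop :=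
  forall delta, 0 < delta -> forall eta, 0 < eta ->
  exists eps0, 0 < eps0 /\ forall eps t, 0 < eps < eps0 -> a + delta <= t <= b - delta ->
    Rabs (F eps t - G t) < eta.

Lemma luc_of_parts a b F G :
  rluc a b (fun e t => Re (F e t)) (fun t => Re (G t)) ->
  rluc a b (fun e t => Im (F e t)) (fun t => Im (G t)) -> loc_unif_cv a b F G.
Proof. intros H1 H2 d Hd eta He.
  destruct (H1 d Hd (eta/2) ltac:(lra)) as [e1 [He1 P1]].
  destruct (H2 d Hd (eta/2) ltac:(lra)) as [e2 [He2 P2]].
  exists (Rmin e1 e2). split. apply Rmin_glb_lt; auto.
  intros eps t Heps Ht. eapply Rle_lt_trans. apply Cnorm_le.
  assert (eps < e1) by (eapply Rlt_le_trans; [apply Heps|apply Rmin_l]).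
  assert (eps < e2) by (eapply Rlt_le_trans; [apply Heps|apply Rmin_r]).
  specialize (P1 eps t ltac:(lra) Ht). specialize (P2 eps t ltac:(lra) Ht).
  simpl. unfold Rminus in *. lra. Qed.

Lemma parts_of_luc a b F G : loc_unif_cv a b F G ->
  rluc a b (fun e t => Re (F e t)) (fun t => Re (G t)) /\
  rluc a b (fun e t => Im (F e t)) (fun t => Im (G t)).
Proof. intros H; split; intros d Hd eta He; destruct (H d Hd eta He) as [e0 [He0 P]];
  exists e0; split; auto; intros eps t H1 H2; specialize (P eps t H1 H2).
  - pose proof (Re_le_Cnorm (Csub (F eps t) (G t))). simpl in H0. unfold Rminus. lra.
  - pose proof (Im_le_Cnorm (Csub (F eps t) (G t))). simpl in H0. unfold Rminus. lra. Qed.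

Lemma rluc_plus a b F1 G1 F2 G2 : rluc a b F1 G1 -> rluc a b F2 G2 ->
  rluc a b (fun e t => F1 e t + F2 e t) (fun t => G1 t + G2 t).
Proof. intros H1 H2 d Hd eta He.
  destruct (H1 d Hd (eta/2) ltac:(lra)) as [e1 [He1 P1]].
  destruct (H2 d Hd (eta/2) ltac:(lra)) as [e2 [He2 P2]].
  exists (Rmin e1 e2). split. apply Rmin_glb_lt; auto.
  intros eps t Heps Ht.
  assert (eps < e1) by (eapply Rlt_le_trans; [apply Heps|apply Rmin_l]).
  assert (eps < e2) by (eapply Rlt_le_trans; [apply Heps|apply Rmin_r]).
  specialize (P1 eps t ltac:(lra) Ht). specialize (P2 eps t ltac:(lra) Ht).
  replace (F1 eps t + F2 eps t - (G1 t + G2 t)) with ((F1 eps t - G1 t) + (F2 eps t - G2 t)) by ring.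
  eapply Rle_lt_trans; [apply Rabs_triang|lra]. Qed.

Lemma rluc_scal a b c F G : rluc a b F G -> rluc a b (fun e t => c * F e t) (fun t => c * G t).
Proof. intros H d Hd eta He.
  destruct (H d Hd (eta/(Rabs c + 1))) as [e1 [He1 P1]].
  { apply Rdiv_lt_0_compat; auto. pose proof (Rabs_pos c); lra. }
  exists e1; split; auto. intros eps t Heps Ht. specialize (P1 eps t Heps Ht).
  replace (c * F eps t - c * G t) with (c * (F eps t - G t)) by ring.
  rewrite Rabs_mult. pose proof (Rabs_pos c). pose proof (Rabs_pos (F eps t - G t)).
  apply Rle_lt_trans with ((Rabs c + 1) * Rabs (F eps t - G t)). nra.
  apply Rmult_lt_reg_l with (/ (Rabs c + 1)). apply Rinv_0_lt_compat; lra.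
  rewrite <- Rmult_assoc, Rinv_l by lra. lra. Qed.

Lemma rluc_extG a b F G G' : (forall t, G t = G' t) -> rluc a b F G -> rluc a b F G'.
Proof. intros E H d Hd eta He. destruct (H d Hd eta He) as [e [He' P]]. exists e; split; auto.
  intros; rewrite <- E; auto. Qed.

Lemma rluc_ev a b F F' G :
  (forall delta, 0 < delta -> exists e1, 0 < e1 /\ forall eps t, 0 < eps < e1 ->
      a + delta <= t <= b - delta -> F eps t = F' eps t) ->
  rluc a b F G -> rluc a b F' G.
Proof. intros E H d Hd eta He. destruct (H d Hd eta He) as [e [He' P]].
  destruct (E d Hd) as [e1 [He1 P1]].
  exists (Rmin e e1). split. apply Rmin_glb_lt; auto.
  intros eps t Heps Ht.
  assert (eps < e) by (eapply Rlt_le_trans; [apply Heps|apply Rmin_l]).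
  assert (eps < e1) by (eapply Rlt_le_trans; [apply Heps|apply Rmin_r]).
  rewrite <- P1 by (auto; lra). apply P; auto; lra. Qed.

Lemma rluc_const a b F G : (forall e t, F e t = G t) -> rluc a b F G.
Proof. intros E d Hd eta He. exists 1; split; [lra|]. intros; rewrite E.
  unfold Rminus; rewrite Rplus_opp_r, Rabs_R0; auto. Qed.

Lemma rluc_minus a b F1 G1 F2 G2 : rluc a b F1 G1 -> rluc a b F2 G2 ->
  rluc a b (fun e t => F1 e t - F2 e t) (fun t => G1 t - G2 t).
Proof. intros H1 H2. pose proof (rluc_plus _ _ _ _ _ _ H1 (rluc_scal a b (-1) _ _ H2)) as H.
  eapply rluc_ev; [|eapply rluc_extG; [|exact H]].
  intros; exists 1; split; [lra|]; intros; ring. intros; simpl; ring. Qed.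

Lemma rluc_Rsum a b n (F : nat -> R -> R -> R) (G : nat -> R -> R) :
  (forall j, (j < n)%nat -> rluc a b (F j) (G j)) ->
  rluc a b (fun e t => Rsum n (fun j => F j e t)) (fun t => Rsum n (fun j => G j t)).
Proof. induction n; intros H.
  - apply rluc_const; reflexivity.
  - simpl. apply rluc_plus. apply IHn; intros; apply H; lia. apply H; lia. Qed.

Lemma bounded_cont a b H : continuity H -> exists M, forall t, a <= t <= b -> Rabs (H t) <= M.
Proof. intros C. destruct (Rle_dec a b) as [Hab|Hab].
  - destruct (continuity_ab_maj (fun t => Rabs (H t)) a b Hab) as [x [Px _]].
    + intros c _. apply (continuity_comp H Rabs); auto. apply Rcontinuity_abs.
    + exists (Rabs (H x)). auto.
  - exists 0. intros; lra. Qed.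

Lemma rluc_mulb a b (H : R -> R) F G : continuity H -> rluc a b F G ->
  rluc a b (fun e t => H t * F e t) (fun t => H t * G t).
Proof. intros C R0 d Hd eta He. destruct (bounded_cont a b H C) as [M PM].
  assert (0 <= Rabs M) by apply Rabs_pos.
  destruct (R0 d Hd (eta/(Rabs M + 1))) as [e1 [He1 P1]].
  { apply Rdiv_lt_0_compat; lra. }
  exists e1; split; auto. intros eps t Heps Ht. specialize (P1 eps t Heps Ht).
  replace (H t * F eps t - H t * G t) with (H t * (F eps t - G t)) by ring.
  rewrite Rabs_mult. assert (Rabs (H t) <= Rabs M) by (eapply Rle_trans; [apply PM; lra| apply RRle_abs]).
  pose proof (Rabs_pos (H t)). pose proof (Rabs_pos (F eps t - G t)).
  apply Rle_lt_trans with ((Rabs M + 1) * Rabs (F eps t - G t)). nra.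
  apply Rmult_lt_reg_l with (/ (Rabs M + 1)). apply Rinv_0_lt_compat; lra.
  rewrite <- Rmult_assoc, Rinv_l by lra. lra. Qed.
Definition lk (N k : nat) : Z := (Z.of_nat k - Z.of_nat N)%Z.
Definition opR (N : nat) (rho : Z -> R) (c eps : R) (f : R -> R) (t : R) : R :=
  Rsum (2 * N + 1) (fun k => rho (lk N k) / eps * f (t + c * IZR (lk N k) * eps)).
Definition S0 (N : nat) (rho : Z -> R) : R := Rsum (2 * N + 1) (fun k => rho (lk N k)).
Definition S1 (N : nat) (rho : Z -> R) : R :=
  Rsum (2 * N + 1) (fun k => IZR (lk N k) * rho (lk N k)).

Lemma lk_bound N k : (k < 2 * N + 1)%nat -> - INR N <= IZR (lk N k) <= INR N.
Proof. intros H. rewrite INR_IZR_INZ, <- opp_IZR. unfold lk. split; apply IZR_le; lia. Qed.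

Lemma absle x y : Rabs x <= y -> - y <= x <= y.
Proof. intros H. pose proof (RRle_abs x). pose proof (RRle_abs (-x)). rewrite Rabs_Ropp in H1. lra. Qed.

Lemma mvt_step F Ge : (forall s, derivable_pt_lim F s (Ge s)) ->
  forall t h, exists xi, Rabs (xi - t) <= Rabs h /\ F (t + h) - F t = h * Ge xi.
Proof. intros D t h. destruct (Rtotal_order h 0) as [Hh|[Hh|Hh]].
  - destruct (MVT_cor2 F Ge (t + h) t ltac:(lra) (fun c _ => D c)) as [xi [E Hx]].
    exists xi. split. rewrite !Rabs_left by lra. lra. nra.
  - subst. exists t. split. unfold Rminus; rewrite Rplus_opp_r, Rabs_R0; lra.
    rewrite Rplus_0_r; ring.
  - destruct (MVT_cor2 F Ge t (t + h) ltac:(lra) (fun c _ => D c)) as [xi [E Hx]].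
    exists xi. split. rewrite !Rabs_right by lra. lra. rewrite E; ring. Qed.

Lemma CL a b N rho c sigma (F Ge : R -> R -> R) (G : R -> R) :
  Rabs c = 1 -> S0 N rho = 0 -> S1 N rho = sigma ->
  (forall eps, 0 < eps -> forall s, derivable_pt_lim (F eps) s (Ge eps s)) ->
  rluc a b Ge G -> continuity G ->
  rluc a b (fun eps t => opR N rho c eps (F eps) t) (fun t => c * sigma * G t).
Proof.
  intros Hc H0 H1 HD HU HG d Hd eta He.
  set (A := Rsum (2 * N + 1) (fun k => Rabs (IZR (lk N k) * rho (lk N k)))).
  assert (HA : 0 <= A) by (apply Rsum_ge0; intros; apply Rabs_pos).
  set (e' := eta / (2 * (A + 1))).
  assert (He' : 0 < e') by (apply Rdiv_lt_0_compat; lra).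
  destruct (HU (d/2) ltac:(lra) e' He') as [e1 [He1 P1]].
  destruct (Heine G (fun c => a <= c <= b) (compact_P3 a b) (fun x _ => HG x) (mkposreal e' He'))
    as [[r Hr] Pr]. simpl in Pr.
  pose proof (pos_INR N) as HN.
  exists (Rmin e1 (Rmin (r / (INR N + 1)) (d / (2 * (INR N + 1))))).
  split. { apply Rmin_glb_lt; auto. apply Rmin_glb_lt; apply Rdiv_lt_0_compat; lra. }
  intros eps t Heps Ht.
  assert (E1 : eps < e1) by (eapply Rlt_le_trans; [apply Heps|apply Rmin_l]).
  assert (E2 : eps < r / (INR N + 1)) by
    (eapply Rlt_le_trans; [apply Heps|]; eapply Rle_trans; [apply Rmin_r|apply Rmin_l]).
  assert (E3 : eps < d / (2 * (INR N + 1))) by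
    (eapply Rlt_le_trans; [apply Heps|]; eapply Rle_trans; [apply Rmin_r|apply Rmin_r]).
  assert (N1 : INR N * eps < r).
  { apply Rmult_lt_compat_r with (r := INR N + 1) in E2; [|lra].
    unfold Rdiv in E2; rewrite Rmult_assoc, Rinv_l in E2 by lra. nra. }
  assert (N2 : INR N * eps <= d / 2).
  { apply Rmult_lt_compat_r with (r := 2 * (INR N + 1)) in E3; [|lra].
    unfold Rdiv in E3; rewrite Rmult_assoc, Rinv_l in E3 by lra. nra. }
  assert (Eq : opR N rho c eps (F eps) t - c * sigma * G t =
     Rsum (2 * N + 1) (fun k => rho (lk N k) / eps * (F eps (t + c * IZR (lk N k) * eps) - F eps t)
                        - c * IZR (lk N k) * rho (lk N k) * G t)).
  { rewrite Rsum_minus.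
    rewrite (Rsum_ext _ (fun k => rho (lk N k) / eps * (F eps (t + c * IZR (lk N k) * eps) - F eps t))
       (fun k => rho (lk N k) / eps * F eps (t + c * IZR (lk N k) * eps) - (F eps t / eps) * rho (lk N k)))
      by (intros; field; lra).
    rewrite Rsum_minus, Rsum_scal.
    rewrite (Rsum_ext _ (fun k => c * IZR (lk N k) * rho (lk N k) * G t)
       (fun k => (c * G t) * (IZR (lk N k) * rho (lk N k)))) by (intros; ring).
    rewrite Rsum_scal. fold (S0 N rho). fold (S1 N rho). rewrite H0, H1. unfold opR. ring. }
  rewrite Eq. eapply Rle_lt_trans. apply Rsum_abs.
  apply Rle_lt_trans with (Rsum (2 * N + 1) (fun k => (2 * e') * Rabs (IZR (lk N k) * rho (lk N k)))).
  - apply Rsum_le. intros k Hk. pose proof (lk_bound N k Hk) as Lb.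
    destruct (mvt_step (F eps) (Ge eps) (HD eps ltac:(lra)) t (c * IZR (lk N k) * eps)) as [xi [Hx Ex]].
    rewrite Ex.
    assert (Hh : Rabs (c * IZR (lk N k) * eps) <= INR N * eps).
    { rewrite !Rabs_mult, Hc, (Rabs_right eps) by lra.
      assert (Rabs (IZR (lk N k)) <= INR N) by (apply Rabs_le; lra). nra. }
    replace (rho (lk N k) / eps * (c * IZR (lk N k) * eps * Ge eps xi) - c * IZR (lk N k) * rho (lk N k) * G t)
      with (c * (IZR (lk N k) * rho (lk N k)) * (Ge eps xi - G t)) by (field; lra).
    rewrite !Rabs_mult, Hc.
    assert (Rabs (Ge eps xi - G t) <= 2 * e').
    { replace (Ge eps xi - G t) with ((Ge eps xi - G xi) + (G xi - G t)) by ring.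
      eapply Rle_trans; [apply Rabs_triang|].
      assert (Rabs (xi - t) <= d / 2) by lra.
      apply absle in H.
      assert (Rabs (Ge eps xi - G xi) < e') by (apply P1; lra).
      assert (Rabs (G xi - G t) < e') by (apply Pr; lra).
      lra. }
    pose proof (Rabs_pos (IZR (lk N k))). pose proof (Rabs_pos (rho (lk N k))).
    pose proof (Rabs_pos (Ge eps xi - G t)).
    assert (0 <= Rabs (IZR (lk N k)) * Rabs (rho (lk N k))) by nra. nra.
  - rewrite Rsum_scal. fold A. unfold e'.
    apply Rle_lt_trans with (eta * (A / (A + 1))).
    + right; field; lra.
    + assert (A / (A + 1) < 1). { apply Rmult_lt_reg_r with (A + 1); [lra|].
        unfold Rdiv; rewrite Rmult_assoc, Rinv_l by lra. lra. } nra.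
Qed.
Lemma chi_one a b eps l t m : 0 < eps -> - m <= IZR l <= m -> a + m * eps <= t <= b - m * eps ->
  chi a b eps l t = 1.
Proof. intros He Hl Ht. unfold chi.
  destruct (Rle_dec (Rmax a (a + IZR l * eps)) t) as [h1|h1];
  [destruct (Rle_dec t (Rmin b (b + IZR l * eps))) as [h2|h2]|]; auto; exfalso.
  - apply h2. apply Rmin_glb; nra.
  - apply h1. apply Rmax_lub; nra. Qed.

Definition ReG (g : Z -> Cplx) : Z -> R := fun l => Re (g l).
Definition ImG (g : Z -> Cplx) : Z -> R := fun l => Im (g l).

Lemma chi_in a b N eps delta t k l : 0 < eps -> INR N * eps <= delta -> a + delta <= t <= b - delta ->
  (k < 2 * N + 1)%nat -> (l = lk N k \/ l = (- lk N k)%Z) -> chi a b eps l t = 1.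
Proof. intros He HN Ht Hk Hl. pose proof (lk_bound N k Hk).
  apply chi_one with (INR N); auto.
  destruct Hl; subst; [lra| rewrite opp_IZR; lra]. lra. Qed.

Lemma Re_boxC_in a b N g eps f t delta : 0 < eps -> INR N * eps <= delta -> a + delta <= t <= b - delta ->
  Re (boxC a b N g eps f t) = opR N (ReG g) 1 eps (fun s => Re (f s)) t - opR N (ImG g) 1 eps (fun s => Im (f s)) t.
Proof. intros He HN Ht. unfold boxC, CsumZ, opR. rewrite Re_Csum, <- Rsum_minus.
  apply Rsum_ext. intros k Hk. rewrite (chi_in a b N eps delta t k) by (auto; right; reflexivity).
  unfold ReG, ImG, lk. replace (t + 1 * IZR (Z.of_nat k - Z.of_nat N) * eps)
    with (t + IZR (Z.of_nat k - Z.of_nat N) * eps) by ring. simpl. field. lra. Qed.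

Lemma Im_boxC_in a b N g eps f t delta : 0 < eps -> INR N * eps <= delta -> a + delta <= t <= b - delta ->
  Im (boxC a b N g eps f t) = opR N (ReG g) 1 eps (fun s => Im (f s)) t + opR N (ImG g) 1 eps (fun s => Re (f s)) t.
Proof. intros He HN Ht. unfold boxC, CsumZ, opR. rewrite Im_Csum, <- Rsum_plus.
  apply Rsum_ext. intros k Hk. rewrite (chi_in a b N eps delta t k) by (auto; right; reflexivity).
  unfold ReG, ImG, lk. replace (t + 1 * IZR (Z.of_nat k - Z.of_nat N) * eps)
    with (t + IZR (Z.of_nat k - Z.of_nat N) * eps) by ring. simpl. field. lra. Qed.

Lemma Re_boxmC_in a b N g eps f t delta : 0 < eps -> INR N * eps <= delta -> a + delta <= t <= b - delta ->
  Re (boxmC a b N g eps f t) = opR N (ReG g) (-1) eps (fun s => Re (f s)) t - opR N (ImG g) (-1) eps (fun s => Im (f s)) t.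
Proof. intros He HN Ht. unfold boxmC, CsumZ, opR. rewrite Re_Csum, <- Rsum_minus.
  apply Rsum_ext. intros k Hk. rewrite (chi_in a b N eps delta t k) by (auto; left; reflexivity).
  unfold ReG, ImG, lk. replace (t + -1 * IZR (Z.of_nat k - Z.of_nat N) * eps)
    with (t - IZR (Z.of_nat k - Z.of_nat N) * eps) by ring. simpl. field. lra. Qed.

Lemma Im_boxmC_in a b N g eps f t delta : 0 < eps -> INR N * eps <= delta -> a + delta <= t <= b - delta ->
  Im (boxmC a b N g eps f t) = opR N (ReG g) (-1) eps (fun s => Im (f s)) t + opR N (ImG g) (-1) eps (fun s => Re (f s)) t.
Proof. intros He HN Ht. unfold boxmC, CsumZ, opR. rewrite Im_Csum, <- Rsum_plus.
  apply Rsum_ext. intros k Hk. rewrite (chi_in a b N eps delta t k) by (auto; left; reflexivity).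
  unfold ReG, ImG, lk. replace (t + -1 * IZR (Z.of_nat k - Z.of_nat N) * eps)
    with (t - IZR (Z.of_nat k - Z.of_nat N) * eps) by ring. simpl. field. lra. Qed.

Lemma opR_ext N rho c eps f f' t : (forall k, (k < 2 * N + 1)%nat ->
   f (t + c * IZR (lk N k) * eps) = f' (t + c * IZR (lk N k) * eps)) -> opR N rho c eps f t = opR N rho c eps f' t.
Proof. intros H. unfold opR. apply Rsum_ext. intros k Hk. rewrite H; auto. Qed.

Lemma opR_0 N rho c eps t : opR N rho c eps (fun _ => 0) t = 0.
Proof. unfold opR. apply Rsum_0'. intros; ring. Qed.

Lemma small_eps N delta : 0 < delta -> exists e1, 0 < e1 /\ forall eps, 0 < eps < e1 -> INR N * eps <= delta.
Proof. intros Hd. pose proof (pos_INR N). exists (delta / (INR N + 1)). split.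
  apply Rdiv_lt_0_compat; lra. intros eps He.
  destruct He as [He1 He2]. apply Rmult_lt_compat_r with (r := INR N + 1) in He2; [|lra].
  unfold Rdiv in He2; rewrite Rmult_assoc, Rinv_l in He2 by lra. nra. Qed.

Lemma ev_in N a b (F F' : R -> R -> R) :
  (forall delta eps t, 0 < eps -> INR N * eps <= delta -> a + delta <= t <= b - delta -> F eps t = F' eps t) ->
  forall delta, 0 < delta -> exists e1, 0 < e1 /\ forall eps t, 0 < eps < e1 ->
      a + delta <= t <= b - delta -> F eps t = F' eps t.
Proof. intros H d Hd. destruct (small_eps N d Hd) as [e1 [He1 P1]]. exists e1; split; auto.
  intros eps t He Ht. apply (H d); auto; lra. Qed.
Lemma zero_of_small x : (forall eta, 0 < eta -> Rabs x < eta) -> x = 0.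
Proof. intros H. destruct (Req_dec x 0); auto. exfalso.
  specialize (H (Rabs x) (Rabs_pos_lt x H0)). lra. Qed.

Lemma opR_one N rho c eps t : eps <> 0 -> opR N rho c eps (fun _ => 1) t = S0 N rho / eps.
Proof. intros He. unfold opR, S0. unfold Rdiv. rewrite Rmult_comm, <- Rsum_scal.
  apply Rsum_ext; intros; field; auto. Qed.

Lemma opR_id N rho c eps t : eps <> 0 -> opR N rho c eps (fun s => s) t = t * S0 N rho / eps + c * S1 N rho.
Proof. intros He. unfold opR, S0, S1.
  replace (t * Rsum (2 * N + 1) (fun k => rho (lk N k)) / eps) with ((t / eps) * Rsum (2 * N + 1) (fun k => rho (lk N k))) by (field; auto).
  rewrite <- !Rsum_scal, <- Rsum_plus.
  apply Rsum_ext; intros; field; auto. Qed.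

Lemma ext_e a b N rho c sigma : a < b -> c <> 0 ->
  rluc a b (fun eps t => opR N rho c eps (fun _ => 1) t) (fun _ => 0) ->
  rluc a b (fun eps t => opR N rho c eps (fun s => s) t) (fun _ => c * sigma) ->
  S0 N rho = 0 /\ S1 N rho = sigma.
Proof. intros Hab Hc H1 H2.
  set (d := (b - a) / 4). set (t0 := (a + b) / 2).
  assert (Hd : 0 < d) by (unfold d; lra). assert (Ht : a + d <= t0 <= b - d) by (unfold d, t0; lra).
  assert (E0 : S0 N rho = 0).
  { destruct (H1 d Hd 1 ltac:(lra)) as [e0 [He0 P]].
    destruct (Req_dec (S0 N rho) 0) as [Z|Z]; auto. exfalso.
    pose proof (Rabs_pos_lt _ Z).
    set (eps := Rmin e0 (Rabs (S0 N rho)) / 2).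
    assert (0 < Rmin e0 (Rabs (S0 N rho))) by (apply Rmin_glb_lt; auto).
    assert (Rmin e0 (Rabs (S0 N rho)) <= e0) by apply Rmin_l.
    assert (Rmin e0 (Rabs (S0 N rho)) <= Rabs (S0 N rho)) by apply Rmin_r.
    specialize (P eps t0 ltac:(unfold eps; lra) Ht). rewrite opR_one in P by (unfold eps; lra).
    rewrite Rminus_0_r in P. unfold Rdiv in P. rewrite Rabs_mult, Rabs_inv, (Rabs_right eps) in P by (unfold eps; lra).
    apply Rmult_lt_compat_r with (r := eps) in P; [|unfold eps; lra].
    rewrite Rmult_assoc, Rinv_l in P by (unfold eps; lra). unfold eps in P. lra. }
  split; auto. apply Rminus_diag_uniq. apply zero_of_small. intros eta He.
  destruct (H2 d Hd (eta * Rabs c)) as [e0 [He0 P]]. { apply Rmult_lt_0_compat; auto. apply Rabs_pos_lt; auto. }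
  specialize (P (e0/2) t0 ltac:(lra) Ht). rewrite opR_id in P by lra. rewrite E0 in P.
  replace (t0 * 0 / (e0 / 2) + c * S1 N rho - c * sigma) with (c * (S1 N rho - sigma)) in P by (field; lra).
  rewrite Rabs_mult in P. pose proof (Rabs_pos_lt c Hc). nra. Qed.
Lemma e_iff N g : prop_e N g <->
  (S0 N (ReG g) = 0 /\ S0 N (ImG g) = 0 /\ S1 N (ReG g) = 1 /\ S1 N (ImG g) = 0).
Proof.
  assert (A1 : Re (CsumZ N g) = S0 N (ReG g)) by (unfold CsumZ; rewrite Re_Csum; reflexivity).
  assert (A2 : Im (CsumZ N g) = S0 N (ImG g)) by (unfold CsumZ; rewrite Im_Csum; reflexivity).
  assert (A3 : Re (CsumZ N (fun l => Cmul (RtoC (IZR l)) (g l))) = S1 N (ReG g)).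
  { unfold CsumZ; rewrite Re_Csum. apply Rsum_ext; intros; unfold ReG, lk; cbn [Re Im Cmul RtoC]; ring. }
  assert (A4 : Im (CsumZ N (fun l => Cmul (RtoC (IZR l)) (g l))) = S1 N (ImG g)).
  { unfold CsumZ; rewrite Im_Csum. apply Rsum_ext; intros; unfold ImG, lk; cbn [Re Im Cmul RtoC]; ring. }
  unfold prop_e. split.
  - intros [E1 E2]. rewrite <- A1, <- A2, <- A3, <- A4, E1, E2. simpl. auto.
  - intros [E1 [E2 [E3 E4]]]. split; apply Cext; simpl; congruence. Qed.

Lemma luc_boxC_iff a b N g h G :
  loc_unif_cv a b (fun eps t => boxC a b N g eps (fun s => RtoC (h s)) t) G <->
  rluc a b (fun eps t => opR N (ReG g) 1 eps h t) (fun t => Re (G t)) /\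
  rluc a b (fun eps t => opR N (ImG g) 1 eps h t) (fun t => Im (G t)).
Proof.
  assert (E1 : forall delta eps t, 0 < eps -> INR N * eps <= delta -> a + delta <= t <= b - delta ->
     Re (boxC a b N g eps (fun s => RtoC (h s)) t) = opR N (ReG g) 1 eps h t).
  { intros. rewrite (Re_boxC_in a b N g eps _ t delta) by auto. simpl. rewrite opR_0. unfold Rminus; rewrite ?Ropp_0, ?Rplus_0_r, ?Rplus_0_l; reflexivity. }
  assert (E2 : forall delta eps t, 0 < eps -> INR N * eps <= delta -> a + delta <= t <= b - delta ->
     Im (boxC a b N g eps (fun s => RtoC (h s)) t) = opR N (ImG g) 1 eps h t).
  { intros. rewrite (Im_boxC_in a b N g eps _ t delta) by auto. simpl. rewrite opR_0. unfold Rminus; rewrite ?Ropp_0, ?Rplus_0_r, ?Rplus_0_l; reflexivity. }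
  split.
  - intros H. destruct (parts_of_luc _ _ _ _ H) as [H1 H2]. split.
    + eapply rluc_ev; [apply ev_in with N; apply E1|exact H1].
    + eapply rluc_ev; [apply ev_in with N; apply E2|exact H2].
  - intros [H1 H2]. apply luc_of_parts.
    + eapply rluc_ev; [apply ev_in with N; intros; symmetry; eapply E1; eauto|exact H1].
    + eapply rluc_ev; [apply ev_in with N; intros; symmetry; eapply E2; eauto|exact H2].
Qed.

Lemma luc_boxmC_iff a b N g h G :
  loc_unif_cv a b (fun eps t => boxmC a b N g eps (fun s => RtoC (h s)) t) G <->
  rluc a b (fun eps t => opR N (ReG g) (-1) eps h t) (fun t => Re (G t)) /\
  rluc a b (fun eps t => opR N (ImG g) (-1) eps h t) (fun t => Im (G t)).
Proof.
  assert (E1 : forall delta eps t, 0 < eps -> INR N * eps <= delta -> a + delta <= t <= b - delta ->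
     Re (boxmC a b N g eps (fun s => RtoC (h s)) t) = opR N (ReG g) (-1) eps h t).
  { intros. rewrite (Re_boxmC_in a b N g eps _ t delta) by auto. simpl. rewrite opR_0. unfold Rminus; rewrite ?Ropp_0, ?Rplus_0_r, ?Rplus_0_l; reflexivity. }
  assert (E2 : forall delta eps t, 0 < eps -> INR N * eps <= delta -> a + delta <= t <= b - delta ->
     Im (boxmC a b N g eps (fun s => RtoC (h s)) t) = opR N (ImG g) (-1) eps h t).
  { intros. rewrite (Im_boxmC_in a b N g eps _ t delta) by auto. simpl. rewrite opR_0. unfold Rminus; rewrite ?Ropp_0, ?Rplus_0_r, ?Rplus_0_l; reflexivity. }
  split.
  - intros H. destruct (parts_of_luc _ _ _ _ H) as [H1 H2]. split.
    + eapply rluc_ev; [apply ev_in with N; apply E1|exact H1].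
    + eapply rluc_ev; [apply ev_in with N; apply E2|exact H2].
  - intros [H1 H2]. apply luc_of_parts.
    + eapply rluc_ev; [apply ev_in with N; intros; symmetry; eapply E1; eauto|exact H1].
    + eapply rluc_ev; [apply ev_in with N; intros; symmetry; eapply E2; eauto|exact H2].
Qed.

Lemma deriv_cont f f' : (forall t, derivable_pt_lim f t (f' t)) -> continuity f.
Proof. intros H t. apply derivable_continuous_pt. exists (f' t). apply H. Qed.

Lemma conv_h a b N rho c sigma h h' : Rabs c = 1 -> S0 N rho = 0 -> S1 N rho = sigma ->
  (forall s, derivable_pt_lim h s (h' s)) -> continuity h' ->
  rluc a b (fun eps t => opR N rho c eps h t) (fun t => c * sigma * h' t).
Proof. intros. apply CL with (F := fun _ => h) (Ge := fun _ => h'); auto.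
  apply rluc_const; auto. Qed.

Lemma e_from a b N g c : a < b -> c <> 0 ->
  (forall rho sigma, (rho = ReG g /\ sigma = 1) \/ (rho = ImG g /\ sigma = 0) ->
     rluc a b (fun eps t => opR N rho c eps (fun _ => 1) t) (fun _ => 0) /\
     rluc a b (fun eps t => opR N rho c eps (fun s => s) t) (fun _ => c * sigma)) -> prop_e N g.
Proof. intros Hab Hc H. apply e_iff.
  destruct (H (ReG g) 1 (or_introl (conj eq_refl eq_refl))) as [A1 A2].
  destruct (H (ImG g) 0 (or_intror (conj eq_refl eq_refl))) as [B1 B2].
  destruct (ext_e a b N _ c 1 Hab Hc A1 A2). destruct (ext_e a b N _ c 0 Hab Hc B1 B2). auto. Qed.

Lemma d_c_const c : derivable_pt_lim (fun _ : R => c) 0 0 /\ forall t, derivable_pt_lim (fun _ : R => c) t 0.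
Proof. split; intros; apply derivable_pt_lim_const. Qed.
Lemma d_id t : derivable_pt_lim (fun s : R => s) t 1.
Proof. apply derivable_pt_lim_id. Qed.
Lemma cont_const c : continuity (fun _ : R => c).
Proof. apply continuity_const. intros x y; reflexivity. Qed.

Lemma e_to_rluc4 a b N g c h h' : prop_e N g -> Rabs c = 1 ->
  (forall s, derivable_pt_lim h s (h' s)) -> continuity h' ->
  rluc a b (fun eps t => opR N (ReG g) c eps h t) (fun t => c * h' t) /\
  rluc a b (fun eps t => opR N (ImG g) c eps h t) (fun t => 0).
Proof. intros He Hc Hd Hc'. apply e_iff in He. destruct He as [E1 [E2 [E3 E4]]]. split.
  - eapply rluc_extG; [|apply (conv_h a b N _ c 1 h h'); auto]. intros; simpl; ring.
  - eapply rluc_extG; [|apply (conv_h a b N _ c 0 h h'); auto]. intros; simpl; ring. Qed.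
Lemma C2_const c : C2_with (fun _ => c) (fun _ => 0) (fun _ => 0).
Proof. split; [|split]; intros; try apply derivable_pt_lim_const. apply cont_const. Qed.
Lemma C2_id : C2_with (fun t => t) (fun _ => 1) (fun _ => 0).
Proof. split; [|split]; intros; try apply derivable_pt_lim_const. apply derivable_pt_lim_id. apply cont_const. Qed.

Lemma d_iff a b N g : a < b -> prop_d a b N g <-> prop_e N g.
Proof. intros Hab. split.
  - intros [H1 H2]. apply (e_from a b N g 1 Hab ltac:(lra)).
    apply (luc_boxC_iff a b N g (fun _ => 1)) in H1. apply (luc_boxC_iff a b N g (fun s => s)) in H2.
    destruct H1 as [A1 B1], H2 as [A2 B2].
    intros rho sigma [[-> ->]|[-> ->]]; split.
    + eapply rluc_extG; [|exact A1]. reflexivity.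
    + eapply rluc_extG; [|exact A2]. intros; simpl; ring.
    + eapply rluc_extG; [|exact B1]. reflexivity.
    + eapply rluc_extG; [|exact B2]. intros; simpl; ring.
  - intros He. split.
    + apply (luc_boxC_iff a b N g (fun _ => 1)).
      destruct (e_to_rluc4 a b N g 1 (fun _ => 1) (fun _ => 0) He) as [A B];
        [rewrite Rabs_R1; auto| intros; apply derivable_pt_lim_const|apply cont_const|].
      split; [eapply rluc_extG; [|exact A]|eapply rluc_extG; [|exact B]]; intros; simpl; ring.
    + apply (luc_boxC_iff a b N g (fun s => s)).
      destruct (e_to_rluc4 a b N g 1 (fun s => s) (fun _ => 1) He) as [A B];
        [rewrite Rabs_R1; auto| intros; apply derivable_pt_lim_id|apply cont_const|].
      split; [eapply rluc_extG; [|exact A]|eapply rluc_extG; [|exact B]]; intros; simpl; ring.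
Qed.

Lemma b_iff a b d N g : a < b -> (1 <= d)%nat -> prop_b d a b N g <-> prop_e N g.
Proof. intros Hab Hd. split.
  - intros Hb. apply (proj1 (d_iff a b N g Hab)). split.
    + exact (Hb (fun _ _ => 1) (fun _ _ => 0) (fun _ _ => 0) (fun _ _ => C2_const 1) 0%nat ltac:(lia)).
    + exact (Hb (fun s _ => s) (fun _ _ => 1) (fun _ _ => 0) (fun _ _ => C2_id) 0%nat ltac:(lia)).
  - intros He x x1 x2 Hx i Hi. destruct (Hx i Hi) as [D1 [D2 C]].
    apply (luc_boxC_iff a b N g (fun t => x t i)).
    destruct (e_to_rluc4 a b N g 1 (fun t => x t i) (fun t => x1 t i) He) as [A B];
      [rewrite Rabs_R1; auto| auto | apply (deriv_cont _ _ D2)|].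
    split; [eapply rluc_extG; [|exact A]|eapply rluc_extG; [|exact B]]; intros; simpl; ring.
Qed.

Lemma c_iff a b d N g : a < b -> (1 <= d)%nat -> prop_c d a b N g <-> prop_e N g.
Proof. intros Hab Hd. split.
  - intros Hc. apply (e_from a b N g (-1) Hab ltac:(lra)).
    pose proof (Hc (fun _ _ => 1) (fun _ _ => 0) (fun _ _ => 0) (fun _ _ => C2_const 1) 0%nat ltac:(lia)) as H1.
    pose proof (Hc (fun s _ => s) (fun _ _ => 1) (fun _ _ => 0) (fun _ _ => C2_id) 0%nat ltac:(lia)) as H2.
    apply (luc_boxmC_iff a b N g (fun _ => 1)) in H1. apply (luc_boxmC_iff a b N g (fun s => s)) in H2.
    destruct H1 as [A1 B1], H2 as [A2 B2].
    intros rho sigma [[-> ->]|[-> ->]]; split.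
    + eapply rluc_extG; [|exact A1]. intros; simpl; ring.
    + eapply rluc_extG; [|exact A2]. intros; simpl; ring.
    + eapply rluc_extG; [|exact B1]. intros; simpl; ring.
    + eapply rluc_extG; [|exact B2]. intros; simpl; ring.
  - intros He x x1 x2 Hx i Hi. destruct (Hx i Hi) as [D1 [D2 C]].
    apply (luc_boxmC_iff a b N g (fun t => x t i)).
    destruct (e_to_rluc4 a b N g (-1) (fun t => x t i) (fun t => x1 t i) He) as [A B];
      [unfold Rabs; destruct Rcase_abs; lra| auto | apply (deriv_cont _ _ D2)|].
    split; [eapply rluc_extG; [|exact A]|eapply rluc_extG; [|exact B]]; intros; simpl; ring.
Qed.
Definition wgt (k j : nat) : R := if (j <? k)%nat then INR (k - j) else 0.
Definition D2 (y : nat -> R) (j : nat) : R := y j - 2 * y (S j) + y (S (S j)).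

Lemma tele y k : Rsum k (D2 y) = (y (S k) - y k) - (y 1%nat - y 0%nat).
Proof. induction k; simpl; [ring|]. rewrite IHk. unfold D2. ring. Qed.

Lemma wgt_S k j : wgt (S k) (S j) = wgt k (S j) + (if (j <? k)%nat then 1 else 0).
Proof. unfold wgt. destruct (Nat.ltb_spec (S j) (S k)), (Nat.ltb_spec (S j) k), (Nat.ltb_spec j k); try lia.
  - replace (S k - S j)%nat with (S (k - S j)) by lia. rewrite S_INR. ring.
  - replace (S k - S j)%nat with 1%nat by lia. simpl; ring.
  - ring. Qed.

Lemma taylor y M k : (k <= M)%nat ->
  y k = y 0%nat + INR k * (y 1%nat - y 0%nat) + Rsum (M - 1) (fun j => wgt k (S j) * D2 y j).
Proof. induction k; intros Hk.
  - rewrite Rsum_0'. simpl; ring. intros j _. unfold wgt. destruct (Nat.ltb_spec (S j) 0); [lia|ring].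
  - rewrite (Rsum_ext _ _ (fun j => wgt k (S j) * D2 y j + (if (j <? k)%nat then D2 y j else 0)))
      by (intros j Hj; rewrite wgt_S; destruct (j <? k)%nat; ring).
    rewrite Rsum_plus, Rsum_trunc by lia. rewrite tele.
    rewrite S_INR. rewrite IHk at 1 by lia. ring. Qed.

Definition Kc (N : nat) (rho : nat -> R) (sigma : R) (j : nat) : R :=
  Rsum (2 * N + 1) (fun k => rho k * wgt k (S j)) - sigma * (if (j <? N)%nat then 1 else 0).

Lemma CR N (rho y : nat -> R) sigma : (1 <= N)%nat ->
  Rsum (2 * N + 1) rho = 0 -> Rsum (2 * N + 1) (fun k => rho k * INR k) = sigma ->
  Rsum (2 * N + 1) (fun k => rho k * y k) =
  sigma * (y (S N) - y N) + Rsum (2 * N - 1) (fun j => Kc N rho sigma j * D2 y j).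
Proof. intros HN H0 H1.
  rewrite (Rsum_ext _ (fun k => rho k * y k) (fun k => y 0%nat * rho k + (y 1%nat - y 0%nat) * (rho k * INR k)
      + Rsum (2 * N - 1) (fun j => rho k * wgt k (S j) * D2 y j))).
  2:{ intros k Hk. rewrite (taylor y (2 * N) k) at 1 by lia.
      rewrite !Rmult_plus_distr_l, <- (Rsum_scal _ (rho k)).
      f_equal; [ring|]. apply Rsum_ext; intros; ring. }
  rewrite !Rsum_plus, !Rsum_scal, H0, H1, Rsum_comm.
  unfold Kc. rewrite (Rsum_ext (2 * N - 1) (fun j => (Rsum (2 * N + 1) (fun k => rho k * wgt k (S j)) - sigma * (if (j <? N)%nat then 1 else 0)) * D2 y j) (fun j => Rsum (2 * N + 1) (fun k => rho k * wgt k (S j)) * D2 y j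
      - sigma * (if (j <? N)%nat then D2 y j else 0))) by (intros j Hj; destruct (j <? N)%nat; ring).
  rewrite Rsum_minus, Rsum_scal, Rsum_trunc by lia. rewrite tele.
  rewrite (Rsum_ext (2 * N - 1) (fun j => Rsum (2 * N + 1) (fun k => rho k * wgt k (S j) * D2 y j))
     (fun j => Rsum (2 * N + 1) (fun k => rho k * wgt k (S j)) * D2 y j)).
  ring. intros j _. rewrite Rmult_comm, <- Rsum_scal. apply Rsum_ext; intros; ring. Qed.
Lemma Re_boxC_real_in a b N g eps h t delta : 0 < eps -> INR N * eps <= delta -> a + delta <= t <= b - delta ->
  Re (boxC a b N g eps (fun s => RtoC (h s)) t) = opR N (ReG g) 1 eps h t.
Proof. intros. rewrite (Re_boxC_in a b N g eps _ t delta) by auto. simpl. rewrite opR_0.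
  unfold Rminus; rewrite ?Ropp_0, ?Rplus_0_r; reflexivity. Qed.
Lemma Im_boxC_real_in a b N g eps h t delta : 0 < eps -> INR N * eps <= delta -> a + delta <= t <= b - delta ->
  Im (boxC a b N g eps (fun s => RtoC (h s)) t) = opR N (ImG g) 1 eps h t.
Proof. intros. rewrite (Im_boxC_in a b N g eps _ t delta) by auto. simpl. rewrite opR_0.
  rewrite ?Rplus_0_l; reflexivity. Qed.

Lemma boxrs_Re a b r s eps h u : Re (boxrs a b (RtoC r) (RtoC s) eps (fun v => RtoC (h v)) u) =
  - (chi a b eps 1 u * (s * / eps * h (u - eps))) + (s - r) * / eps * h u + chi a b eps (-1) u * (r * / eps * h (u + eps)).
Proof. unfold boxrs, Csub. cbn [Re Im Cmul RtoC Cadd Copp]. ring. Qed.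
Lemma boxrs_Im a b r s eps h u : Im (boxrs a b (RtoC r) (RtoC s) eps (fun v => RtoC (h v)) u) = 0.
Proof. unfold boxrs, Csub. cbn [Re Im Cmul RtoC Cadd Copp]. ring. Qed.

Definition yy (N : nat) (h : R -> R) (eps t : R) (j : nat) : R := h (t + 1 * IZR (lk N j) * eps).

Lemma opR_y N rho eps h t : eps <> 0 ->
  opR N rho 1 eps h t = Rsum (2 * N + 1) (fun k => rho (lk N k) * yy N h eps t k) / eps.
Proof. intros He. unfold opR, yy. unfold Rdiv at 2. rewrite Rmult_comm, <- Rsum_scal.
  apply Rsum_ext; intros; field; auto. Qed.

Lemma term_eq a b N eps h t k' : (1 <= N)%nat -> 0 < eps -> a + 2 * INR N * eps <= t <= b - 2 * INR N * eps ->
  (k' < 2 * N - 1)%nat ->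
  Re (boxrs a b (RtoC 1) (RtoC (-1)) eps (fun s => RtoC (h s)) (t - IZR (Z.of_nat k' - Z.of_nat (N - 1)) * eps))
  = D2 (yy N h eps t) (2 * N - 1 - 1 - k') / eps.
Proof. intros HN He Ht Hk. rewrite boxrs_Re.
  set (l := (Z.of_nat k' - Z.of_nat (N - 1))%Z).
  assert (Hl : (- Z.of_nat N <= l <= Z.of_nat N)%Z) by (unfold l; lia).
  assert (HlR : - INR N <= IZR l <= INR N).
  { rewrite INR_IZR_INZ, <- opp_IZR. split; apply IZR_le; lia. }
  assert (HN1 : 1 <= INR N) by (apply (le_INR 1); lia).
  rewrite (chi_one a b eps 1 _ 1), (chi_one a b eps (-1) _ 1) by (auto; try lra; nra).
  unfold D2, yy.
  assert (E1 : lk N (2 * N - 1 - 1 - k') = (- l - 1)%Z) by (unfold lk, l; lia).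
  assert (E2 : lk N (S (2 * N - 1 - 1 - k')) = (- l)%Z) by (unfold lk, l; lia).
  assert (E3 : lk N (S (S (2 * N - 1 - 1 - k'))) = (- l + 1)%Z) by (unfold lk, l; lia).
  rewrite E1, E2, E3, minus_IZR, plus_IZR, opp_IZR.
  replace (t - IZR l * eps - eps) with (t + 1 * (- IZR l - 1) * eps) by ring.
  replace (t - IZR l * eps + eps) with (t + 1 * (- IZR l + 1) * eps) by ring.
  replace (t - IZR l * eps) with (t + 1 * (- IZR l) * eps) by ring.
  field. lra. Qed.

Definition rhsF a b N eps (k : Z -> Cplx) (h : R -> R) t : Cplx :=
  Cadd (boxrs a b (RtoC 1) (RtoC 0) eps (fun s => RtoC (h s)) t)
       (CsumZ (N - 1) (fun l => Cmul (k (l + Z.of_nat N)%Z)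
            (boxrs a b (RtoC 1) (RtoC (-1)) eps (fun s => RtoC (h s)) (t - IZR l * eps)))).

Lemma rhs_parts a b N eps k h t : (1 <= N)%nat -> 0 < eps -> a + 2 * INR N * eps <= t <= b - 2 * INR N * eps ->
  Re (rhsF a b N eps k h t) = (yy N h eps t (S N) - yy N h eps t N) / eps +
     Rsum (2 * N - 1) (fun k' => Re (k (Z.of_nat (S k'))) * D2 (yy N h eps t) (2 * N - 1 - 1 - k') / eps) /\
  Im (rhsF a b N eps k h t) =
     Rsum (2 * N - 1) (fun k' => Im (k (Z.of_nat (S k'))) * D2 (yy N h eps t) (2 * N - 1 - 1 - k') / eps).
Proof. intros HN He Ht.
  assert (HN1 : 1 <= INR N) by (apply (le_INR 1); lia).
  assert (Hn : (2 * (N - 1) + 1 = 2 * N - 1)%nat) by lia.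
  unfold rhsF, CsumZ. cbn [Re Im Cadd]. rewrite Re_Csum, Im_Csum, boxrs_Re, boxrs_Im, Hn.
  split.
  - f_equal.
    + rewrite (chi_one a b eps (-1) _ 1) by (auto; try lra; nra). unfold yy.
      assert (lk N (S N) = 1%Z) by (unfold lk; lia). assert (lk N N = 0%Z) by (unfold lk; lia).
      rewrite H, H0. replace (t + 1 * IZR 1 * eps) with (t + eps) by (simpl; ring).
      replace (t + 1 * IZR 0 * eps) with t by (simpl; ring). field; lra.
    + apply Rsum_ext. intros k' Hk'. cbn [Re Im Cmul]. rewrite boxrs_Im.
      rewrite (term_eq a b N eps h t k') by auto.
      replace (Z.of_nat k' - Z.of_nat (N - 1) + Z.of_nat N)%Z with (Z.of_nat (S k')) by lia. field; lra.
  - rewrite Rplus_0_l. apply Rsum_ext. intros k' Hk'. cbn [Re Im Cmul]. rewrite boxrs_Im.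
    rewrite (term_eq a b N eps h t k') by auto.
    replace (Z.of_nat k' - Z.of_nat (N - 1) + Z.of_nat N)%Z with (Z.of_nat (S k')) by lia. field; lra.
Qed.

Lemma S1_nat N rho : Rsum (2 * N + 1) (fun k => rho (lk N k) * INR k) = S1 N rho + INR N * S0 N rho.
Proof. unfold S1, S0. rewrite <- Rsum_scal, <- Rsum_plus. apply Rsum_ext. intros k _.
  unfold lk. rewrite minus_IZR, <- !INR_IZR_INZ. ring. Qed.

Lemma Rsum_div n f e : Rsum n (fun k => f k / e) = Rsum n f / e.
Proof. unfold Rdiv. rewrite Rmult_comm, <- Rsum_scal. apply Rsum_ext; intros; ring. Qed.

Lemma f_iff a b d N g : a < b -> (1 <= d)%nat -> (1 <= N)%nat -> prop_f d a b N g <-> prop_e N g.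
Proof. intros Hab Hd HN.
  assert (HN1 : 1 <= INR N) by (apply (le_INR 1); lia).
  split.
  - intros [k Hk]. apply e_iff.
    set (eps := (b - a) / (4 * INR N + 4)). set (t0 := (a + b) / 2).
    assert (He : 0 < eps) by (unfold eps; apply Rdiv_lt_0_compat; lra).
    assert (Ht : a + 2 * INR N * eps <= t0 <= b - 2 * INR N * eps).
    { assert (E : 4 * INR N * eps + 4 * eps = b - a) by (unfold eps; field; lra). unfold t0; nra. }
    assert (Hd1 : INR N * eps <= 2 * INR N * eps) by nra.
    assert (Ht' : a + INR N * eps <= t0 <= b - INR N * eps) by lra.
    pose proof (Hk eps He (fun _ _ => 1) 0%nat t0 ltac:(lia) Ht) as H1.
    pose proof (Hk eps He (fun s _ => s) 0%nat t0 ltac:(lia) Ht) as H2.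
    change (boxC a b N g eps (fun s => RtoC 1) t0 = rhsF a b N eps k (fun _ => 1) t0) in H1.
    change (boxC a b N g eps (fun s => RtoC s) t0 = rhsF a b N eps k (fun s => s) t0) in H2.
    destruct (rhs_parts a b N eps k (fun _ => 1) t0 HN He Ht) as [R1 I1].
    destruct (rhs_parts a b N eps k (fun s => s) t0 HN He Ht) as [R2 I2].
    pose proof (f_equal Re H1) as A1. pose proof (f_equal Im H1) as B1.
    pose proof (f_equal Re H2) as A2. pose proof (f_equal Im H2) as B2.
    rewrite (Re_boxC_real_in a b N g eps (fun _ => 1) t0 (INR N * eps)) in A1 by (auto; lra).
    rewrite (Im_boxC_real_in a b N g eps (fun _ => 1) t0 (INR N * eps)) in B1 by (auto; lra).
    rewrite (Re_boxC_real_in a b N g eps (fun s => s) t0 (INR N * eps)) in A2 by (auto; lra).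
    rewrite (Im_boxC_real_in a b N g eps (fun s => s) t0 (INR N * eps)) in B2 by (auto; lra).
    rewrite R1 in A1. rewrite I1 in B1. rewrite R2 in A2. rewrite I2 in B2.
    assert (D1 : forall j, D2 (yy N (fun _ => 1) eps t0) j = 0) by (intros; unfold D2, yy; ring).
    assert (D2' : forall j, D2 (yy N (fun s => s) eps t0) j = 0).
    { intros j. unfold D2, yy. unfold lk. rewrite !Nat2Z.inj_succ, !minus_IZR, !succ_IZR. ring. }
    assert (Y1 : yy N (fun s => s) eps t0 (S N) - yy N (fun s => s) eps t0 N = eps).
    { unfold yy, lk. rewrite Nat2Z.inj_succ, !minus_IZR, succ_IZR. ring. }
    rewrite Rsum_0' in A1, B1, A2, B2 by (intros; rewrite ?D1, ?D2'; unfold Rdiv; ring).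
    rewrite Y1 in A2. unfold yy in A1.
    rewrite opR_one in A1, B1 by lra. rewrite opR_id in A2, B2 by lra.
    assert (Z1 : S0 N (ReG g) = 0).
    { replace (1 - 1) with 0 in A1 by ring. unfold Rdiv in A1.
      rewrite Rmult_0_l, Rplus_0_r in A1. apply Rmult_eq_reg_r with (/ eps).
      lra. apply Rgt_not_eq, Rinv_0_lt_compat; auto. }
    assert (Z2 : S0 N (ImG g) = 0).
    { unfold Rdiv in B1. apply Rmult_eq_reg_r with (/ eps). lra. apply Rgt_not_eq, Rinv_0_lt_compat; auto. }
    rewrite Z1 in A2. rewrite Z2 in B2.
    replace (eps / eps) with 1 in A2 by (field; lra).
    repeat split; auto; unfold Rdiv in *; lra.
  - intros He. apply e_iff in He as E. destruct E as [E1 [E2 [E3 E4]]].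
    set (ra := fun k => ReG g (lk N k)). set (rb := fun k => ImG g (lk N k)).
    exists (fun z => mkC (Kc N ra 1 (2 * N - 1 - Z.to_nat z)) (Kc N rb 0 (2 * N - 1 - Z.to_nat z))).
    intros eps Heps x i t Hi Ht. fold (rhsF a b N eps
      (fun z => mkC (Kc N ra 1 (2 * N - 1 - Z.to_nat z)) (Kc N rb 0 (2 * N - 1 - Z.to_nat z))) (fun s => x s i) t).
    destruct (rhs_parts a b N eps (fun z => mkC (Kc N ra 1 (2 * N - 1 - Z.to_nat z)) (Kc N rb 0 (2 * N - 1 - Z.to_nat z)))
       (fun s => x s i) t HN Heps Ht) as [R1 I1].
    assert (Hd1 : INR N * eps <= 2 * INR N * eps) by nra.
    assert (Ht' : a + INR N * eps <= t <= b - INR N * eps) by lra.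
    apply Cext.
    + rewrite R1, (Re_boxC_real_in a b N g eps _ t (INR N * eps)) by (auto; lra).
      rewrite opR_y by lra. cbn [Re].
      rewrite (Rsum_ext (2 * N - 1) _ (fun k' => (fun j => Kc N ra 1 j * D2 (yy N (fun s => x s i) eps t) j / eps) (2 * N - 1 - 1 - k')%nat))
        by (intros k' _; rewrite Nat2Z.id; replace (2 * N - 1 - S k')%nat with (2 * N - 1 - 1 - k')%nat by lia; reflexivity).
      rewrite (Rsum_rev (2 * N - 1) (fun j => Kc N ra 1 j * D2 (yy N (fun s => x s i) eps t) j / eps)), Rsum_div.
      change (Rsum (2 * N + 1) (fun k => ReG g (lk N k) * yy N (fun s => x s i) eps t k)) with (Rsum (2 * N + 1) (fun k => ra k * yy N (fun s => x s i) eps t k)).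
      rewrite (CR N ra (yy N (fun s => x s i) eps t) 1 HN); [field; lra| exact E1 |].
      transitivity (S1 N (ReG g) + INR N * S0 N (ReG g)); [apply S1_nat|]. rewrite E1, E3. ring.
    + rewrite I1, (Im_boxC_real_in a b N g eps _ t (INR N * eps)) by (auto; lra).
      rewrite opR_y by lra. cbn [Im].
      rewrite (Rsum_ext (2 * N - 1) _ (fun k' => (fun j => Kc N rb 0 j * D2 (yy N (fun s => x s i) eps t) j / eps) (2 * N - 1 - 1 - k')%nat))
        by (intros k' _; rewrite Nat2Z.id; replace (2 * N - 1 - S k')%nat with (2 * N - 1 - 1 - k')%nat by lia; reflexivity).
      rewrite (Rsum_rev (2 * N - 1) (fun j => Kc N rb 0 j * D2 (yy N (fun s => x s i) eps t) j / eps)), Rsum_div.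
      change (Rsum (2 * N + 1) (fun k => ImG g (lk N k) * yy N (fun s => x s i) eps t k)) with (Rsum (2 * N + 1) (fun k => rb k * yy N (fun s => x s i) eps t k)).
      rewrite (CR N rb (yy N (fun s => x s i) eps t) 0 HN); [field; lra| exact E2 |].
      transitivity (S1 N (ImG g) + INR N * S0 N (ImG g)); [apply S1_nat|]. rewrite E2, E4. ring.
Qed.
Lemma deriv_plus f g f' g' t : derivable_pt_lim f t f' -> derivable_pt_lim g t g' ->
  derivable_pt_lim (fun s => f s + g s) t (f' + g').
Proof. intros. apply (derivable_pt_lim_plus f g); auto. Qed.
Lemma deriv_mult f g f' g' t : derivable_pt_lim f t f' -> derivable_pt_lim g t g' ->
  derivable_pt_lim (fun s => f s * g s) t (f' * g t + f t * g').
Proof. intros. apply (derivable_pt_lim_mult f g); auto. Qed.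
Lemma deriv_Rsum n (F : nat -> R -> R) (F' : nat -> R -> R) t :
  (forall j, (j < n)%nat -> derivable_pt_lim (F j) t (F' j t)) ->
  derivable_pt_lim (fun s => Rsum n (fun j => F j s)) t (Rsum n (fun j => F' j t)).
Proof. induction n; intros H; simpl.
  - apply derivable_pt_lim_const.
  - apply deriv_plus. apply IHn; intros; apply H; lia. apply H; lia. Qed.
Lemma deriv_shift K m h h' t : (forall s, derivable_pt_lim h s (h' s)) ->
  derivable_pt_lim (fun s => K * h (s + m)) t (K * h' (t + m)).
Proof. intros H.
  assert (D : derivable_pt_lim (fun s => h (s + m)) t (h' (t + m))).
  { replace (h' (t + m)) with (h' (t + m) * 1) by ring.
    apply (derivable_pt_lim_comp (fun s => s + m) h).
    replace 1 with (1 + 0) by ring. apply deriv_plus. apply derivable_pt_lim_id. apply derivable_pt_lim_const.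
    apply H. }
  replace (K * h' (t + m)) with (0 * h (t + m) + K * h' (t + m)) by ring.
  apply (deriv_mult (fun _ => K) (fun s => h (s + m))); auto. apply derivable_pt_lim_const. Qed.
Lemma deriv_opR N rho c eps h h' t : (forall s, derivable_pt_lim h s (h' s)) ->
  derivable_pt_lim (fun s => opR N rho c eps h s) t (opR N rho c eps h' t).
Proof. intros H. unfold opR. apply (deriv_Rsum _ (fun k s => rho (lk N k) / eps * h (s + c * IZR (lk N k) * eps))
   (fun k s => rho (lk N k) / eps * h' (s + c * IZR (lk N k) * eps))).
  intros. apply deriv_shift. auto. Qed.

Lemma cont_Rsum n (F : nat -> R -> R) : (forall j, (j < n)%nat -> continuity (F j)) ->
  continuity (fun s => Rsum n (fun j => F j s)).
Proof. induction n; intros H; simpl.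
  - apply cont_const.
  - apply (continuity_plus (fun s => Rsum n (fun j => F j s)) (F n)). apply IHn; intros; apply H; lia. apply H; lia. Qed.
Lemma cont_plus f g : continuity f -> continuity g -> continuity (fun s => f s + g s).
Proof. intros; apply (continuity_plus f g); auto. Qed.
Lemma cont_mult f g : continuity f -> continuity g -> continuity (fun s => f s * g s).
Proof. intros; apply (continuity_mult f g); auto. Qed.

Lemma smooth_cont f : smooth f -> continuity f.
Proof. intros [D [H0 H]]. subst f. apply (deriv_cont _ (D 1%nat)). apply H. Qed.
Lemma smooth_cont' f f' : smooth f -> (forall t, derivable_pt_lim f t (f' t)) -> continuity f'.
Proof. intros [D [H0 H]] Hf. assert (E : f' = D 1%nat).
  { apply FunctionalExtensionality.functional_extensionality. intros t.
    apply (uniqueness_limite f t). apply Hf. subst f. apply H. }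
  rewrite E. apply (deriv_cont _ (D 2%nat)). apply H. Qed.

Lemma Rsum_lin2 n f g c1 c2 : Rsum n (fun j => c1 * f j + c2 * g j) = c1 * Rsum n f + c2 * Rsum n g.
Proof. rewrite Rsum_plus, !Rsum_scal. reflexivity. Qed.

Lemma box2 a b d N rho1 sigma1 rho2 sigma2 (Pf P'f xf x1f x2f : nat -> R -> R) :
  S0 N rho1 = 0 -> S1 N rho1 = sigma1 -> S0 N rho2 = 0 -> S1 N rho2 = sigma2 ->
  (forall j, (j < d)%nat -> (forall t, derivable_pt_lim (Pf j) t (P'f j t)) /\ continuity (P'f j) /\
     (forall t, derivable_pt_lim (xf j) t (x1f j t)) /\ (forall t, derivable_pt_lim (x1f j) t (x2f j t)) /\
     continuity (x2f j)) ->
  rluc a b (fun eps t => opR N rho1 (-1) eps (fun s => Rsum d (fun j => Pf j s * opR N rho2 1 eps (xf j) s)) t)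
     (fun t => -1 * sigma1 * (sigma2 * Rsum d (fun j => P'f j t * x1f j t) + sigma2 * Rsum d (fun j => Pf j t * x2f j t))).
Proof. intros A0 A1 B0 B1 H.
  assert (Hc : Rabs (-1) = 1) by (unfold Rabs; destruct Rcase_abs; lra).
  eapply rluc_extG; [|apply (CL a b N rho1 (-1) sigma1
     (fun eps s => Rsum d (fun j => Pf j s * opR N rho2 1 eps (xf j) s))
     (fun eps s => Rsum d (fun j => P'f j s * opR N rho2 1 eps (xf j) s + Pf j s * opR N rho2 1 eps (x1f j) s))
     (fun s => Rsum d (fun j => P'f j s * (1 * sigma2 * x1f j s) + Pf j s * (1 * sigma2 * x2f j s)))); auto].
  - intros t. simpl. rewrite <- Rsum_lin2. f_equal. apply Rsum_ext. intros; ring.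
  - intros eps He s. apply (deriv_Rsum d (fun j s => Pf j s * opR N rho2 1 eps (xf j) s)
      (fun j s => P'f j s * opR N rho2 1 eps (xf j) s + Pf j s * opR N rho2 1 eps (x1f j) s)).
    intros j Hj. destruct (H j Hj) as [D1 [C1 [D2 [D3 C3]]]].
    apply deriv_mult; auto. apply deriv_opR; auto.
  - apply (rluc_Rsum a b d (fun j eps s => P'f j s * opR N rho2 1 eps (xf j) s + Pf j s * opR N rho2 1 eps (x1f j) s)
      (fun j s => P'f j s * (1 * sigma2 * x1f j s) + Pf j s * (1 * sigma2 * x2f j s))).
    intros j Hj. destruct (H j Hj) as [D1 [C1 [D2 [D3 C3]]]].
    apply rluc_plus; apply rluc_mulb.
    + auto.
    + apply conv_h; auto. rewrite Rabs_R1; auto. apply (deriv_cont _ _ D3).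
    + apply (deriv_cont _ _ D1).
    + apply conv_h; auto. rewrite Rabs_R1; auto.
  - apply (cont_Rsum d (fun j s => P'f j s * (1 * sigma2 * x1f j s) + Pf j s * (1 * sigma2 * x2f j s))).
    intros j Hj. destruct (H j Hj) as [D1 [C1 [D2 [D3 C3]]]].
    apply cont_plus; apply cont_mult; auto.
    + apply cont_mult. apply cont_const. apply (deriv_cont _ _ D3).
    + apply (deriv_cont _ _ D1).
    + apply cont_mult; auto. apply cont_const.
Qed.
Lemma Re_mvC d M v i : Re (mvC d M v i) = Rsum d (fun j => M i j * Re (v j)).
Proof. unfold mvC. rewrite Re_Csum. apply Rsum_ext; intros; cbn [Re Im Cmul RtoC]; ring. Qed.
Lemma Im_mvC d M v i : Im (mvC d M v i) = Rsum d (fun j => M i j * Im (v j)).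
Proof. unfold mvC. rewrite Im_Csum. apply Rsum_ext; intros; cbn [Re Im Cmul RtoC]; ring. Qed.

Definition FP d N (rho : Z -> R) eps (P : R -> nat -> nat -> R) (x : R -> nat -> R) i (s : R) : R :=
  Rsum d (fun j => P s i j * opR N rho 1 eps (fun u => x u j) s).

Lemma inner_eq d a b N g eps P x t i delta k : 0 < eps -> INR N * eps <= delta / 2 ->
  a + delta <= t <= b - delta -> (k < 2 * N + 1)%nat ->
  let s := t + -1 * IZR (lk N k) * eps in
  Re (mvC d (P s) (fun j => boxC a b N g eps (fun u => RtoC (x u j)) s) i) = FP d N (ReG g) eps P x i s /\
  Im (mvC d (P s) (fun j => boxC a b N g eps (fun u => RtoC (x u j)) s) i) = FP d N (ImG g) eps P x i s.
Proof. intros He HN Ht Hk s. pose proof (lk_bound N k Hk).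
  assert (Hs : a + delta / 2 <= s <= b - delta / 2) by (unfold s; nra).
  rewrite Re_mvC, Im_mvC. unfold FP. split; apply Rsum_ext; intros j _.
  - rewrite (Re_boxC_real_in a b N g eps _ s (delta / 2)); auto.
  - rewrite (Im_boxC_real_in a b N g eps _ s (delta / 2)); auto. Qed.

Lemma Theta_Re_in d a b N g eps P Q Rm J1 J2 x t i delta : 0 < eps -> INR N * eps <= delta / 2 ->
  a + delta <= t <= b - delta ->
  Re (Theta d a b N g eps P Q Rm J1 J2 x t i) =
    (opR N (ReG g) (-1) eps (FP d N (ReG g) eps P x i) t - opR N (ImG g) (-1) eps (FP d N (ImG g) eps P x i) t)
    + - opR N (ReG g) (-1) eps (fun s => mvR d (Rm s) (x s) i) t
    + Rsum d (fun j => Rm t i j * opR N (ReG g) 1 eps (fun u => x u j) t)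
    + mvR d (Q t) (x t) i + opR N (ReG g) (-1) eps (fun s => J1 s i) t + J2 t i.
Proof. intros He HN Ht. assert (HN' : INR N * eps <= delta) by (pose proof (pos_INR N); nra).
  unfold Theta. cbn [Re Im Cadd Copp RtoC].
  rewrite !(Re_boxmC_in a b N g eps _ t delta) by auto. rewrite Re_mvC.
  cbn [Re Im RtoC]. rewrite !opR_0.
  rewrite (opR_ext N (ReG g) (-1) eps _ (FP d N (ReG g) eps P x i) t)
    by (intros k Hk; apply (inner_eq d a b N g eps P x t i delta k); auto).
  rewrite (opR_ext N (ImG g) (-1) eps _ (FP d N (ImG g) eps P x i) t)
    by (intros k Hk; apply (inner_eq d a b N g eps P x t i delta k); auto).
  rewrite (Rsum_ext d _ (fun j => Rm t i j * opR N (ReG g) 1 eps (fun u => x u j) t))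
    by (intros j _; rewrite (Re_boxC_real_in a b N g eps _ t delta); auto).
  ring. Qed.

Lemma Theta_Im_in d a b N g eps P Q Rm J1 J2 x t i delta : 0 < eps -> INR N * eps <= delta / 2 ->
  a + delta <= t <= b - delta ->
  Im (Theta d a b N g eps P Q Rm J1 J2 x t i) =
    (opR N (ReG g) (-1) eps (FP d N (ImG g) eps P x i) t + opR N (ImG g) (-1) eps (FP d N (ReG g) eps P x i) t)
    + - opR N (ImG g) (-1) eps (fun s => mvR d (Rm s) (x s) i) t
    + Rsum d (fun j => Rm t i j * opR N (ImG g) 1 eps (fun u => x u j) t)
    + opR N (ImG g) (-1) eps (fun s => J1 s i) t.
Proof. intros He HN Ht. assert (HN' : INR N * eps <= delta) by (pose proof (pos_INR N); nra).
  unfold Theta. cbn [Re Im Cadd Copp RtoC].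
  rewrite !(Im_boxmC_in a b N g eps _ t delta) by auto. rewrite Im_mvC.
  cbn [Re Im RtoC]. rewrite !opR_0.
  rewrite (opR_ext N (ReG g) (-1) eps _ (FP d N (ImG g) eps P x i) t)
    by (intros k Hk; apply (inner_eq d a b N g eps P x t i delta k); auto).
  rewrite (opR_ext N (ImG g) (-1) eps _ (FP d N (ReG g) eps P x i) t)
    by (intros k Hk; apply (inner_eq d a b N g eps P x t i delta k); auto).
  rewrite (Rsum_ext d _ (fun j => Rm t i j * opR N (ImG g) 1 eps (fun u => x u j) t))
    by (intros j _; rewrite (Im_boxC_real_in a b N g eps _ t delta); auto).
  ring. Qed.
Lemma mvC_zeroM d v i : Re (mvC d (fun _ _ => 0) v i) = 0 /\ Im (mvC d (fun _ _ => 0) v i) = 0.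
Proof. rewrite Re_mvC, Im_mvC. split; apply Rsum_0'; intros; ring. Qed.
Lemma mvR_zeroM d v i : mvR d (fun _ _ => 0) v i = 0.
Proof. unfold mvR. apply Rsum_0'; intros; ring. Qed.
Lemma boxmC_zero a b N g eps f t : (forall s, Re (f s) = 0 /\ Im (f s) = 0) ->
  Re (boxmC a b N g eps f t) = 0 /\ Im (boxmC a b N g eps f t) = 0.
Proof. intros H. unfold boxmC, CsumZ. rewrite Re_Csum, Im_Csum.
  split; apply Rsum_0'; intros k _; cbn [Re Im Cmul RtoC];
  destruct (H (t - IZR (Z.of_nat k - Z.of_nat N) * eps)) as [H1 H2]; rewrite H1, H2; ring. Qed.

Lemma Theta_zero d a b N g eps J1 x t i :
  Re (Theta d a b N g eps (fun _ _ _ => 0) (fun _ _ _ => 0) (fun _ _ _ => 0) J1 (fun _ _ => 0) x t i)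
   = Re (boxmC a b N g eps (fun s => RtoC (J1 s i)) t) /\
  Im (Theta d a b N g eps (fun _ _ _ => 0) (fun _ _ _ => 0) (fun _ _ _ => 0) J1 (fun _ _ => 0) x t i)
   = Im (boxmC a b N g eps (fun s => RtoC (J1 s i)) t).
Proof. unfold Theta. cbn [Re Im Cadd Copp RtoC].
  destruct (boxmC_zero a b N g eps (fun s => mvC d (fun _ _ => 0) (fun j => boxC a b N g eps (fun u => RtoC (x u j)) s) i) t)
    as [A1 A2]. intros; apply mvC_zeroM.
  destruct (boxmC_zero a b N g eps (fun s => RtoC (mvR d (fun _ _ => 0) (x s) i)) t) as [B1 B2].
  intros; cbn [Re Im RtoC]; rewrite mvR_zeroM; auto.
  destruct (mvC_zeroM d (fun j => boxC a b N g eps (fun u => RtoC (x u j)) t) i) as [C1 C2].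
  rewrite A1, A2, B1, B2, C1, C2, mvR_zeroM. split; ring. Qed.

Lemma smooth_const c : smooth (fun _ => c).
Proof. exists (fun k t => match k with O => c | S _ => 0 end). split; [reflexivity|].
  intros [|k] t; apply derivable_pt_lim_const. Qed.
Lemma smooth_id : smooth (fun t => t).
Proof. exists (fun k t => match k with O => t | 1%nat => 1 | _ => 0 end). split; [reflexivity|].
  intros [|[|k]] t; try apply derivable_pt_lim_const. apply derivable_pt_lim_id. Qed.

Lemma a_to_e d a b N g : a < b -> (1 <= d)%nat -> prop_a d a b N g -> prop_e N g.
Proof. intros Hab Hd Ha.
  assert (HP : forall i j, (i < d)%nat -> (j < d)%nat ->
     smooth (fun t => (fun (_ : R) (_ _ : nat) => 0) t i j) /\ smooth (fun t => (fun (_ : R) (_ _ : nat) => 0) t i j) /\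
     smooth (fun t => (fun (_ : R) (_ _ : nat) => 0) t i j) /\
     (forall t, derivable_pt_lim (fun s => (fun (_ : R) (_ _ : nat) => 0) s i j) t ((fun (_ : R) (_ _ : nat) => 0) t i j)) /\
     (forall t, derivable_pt_lim (fun s => (fun (_ : R) (_ _ : nat) => 0) s i j) t ((fun (_ : R) (_ _ : nat) => 0) t i j)) /\
     (forall t, (fun (_ : R) (_ _ : nat) => 0) t i j = (fun (_ : R) (_ _ : nat) => 0) t j i) /\
     (forall t, (fun (_ : R) (_ _ : nat) => 0) t i j = (fun (_ : R) (_ _ : nat) => 0) t j i) /\
     (forall t, (fun (_ : R) (_ _ : nat) => 0) t i j = - (fun (_ : R) (_ _ : nat) => 0) t j i)).
  { intros. cbv beta. repeat split; try apply smooth_const; intros; try apply derivable_pt_lim_const; ring. }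
  assert (G : forall (J1 J1' : R -> nat -> R) (h h' : R -> R), smooth h -> (forall t, derivable_pt_lim h t (h' t)) ->
     J1 = (fun s _ => h s) -> J1' = (fun s _ => h' s) ->
     loc_unif_cv a b (fun eps t => boxmC a b N g eps (fun s => RtoC (h s)) t) (fun t => RtoC (- h' t))).
  { intros J1 J1' h h' Hs Hh E1 E2.
    pose proof (Ha (fun _ _ _ => 0) (fun _ _ _ => 0) (fun _ _ _ => 0) (fun _ _ _ => 0) (fun _ _ _ => 0)
       J1 (fun _ _ => 0) J1' (fun _ _ => 0) (fun _ _ => 0) (fun _ _ => 0) HP) as H.
    subst J1 J1'. specialize (H ltac:(intros i0 _; split; [exact Hs|split; [apply smooth_const|split; [exact Hh|apply C2_const]]]) 0%nat ltac:(lia)).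
    destruct (parts_of_luc _ _ _ _ H) as [H1 H2]. apply luc_of_parts.
    - eapply rluc_ev; [|eapply rluc_extG; [|exact H1]].
      + intros. exists 1. split; [lra|]. intros. apply (Theta_zero d a b N g eps (fun s _ => h s) (fun _ _ => 0) t 0).
      + intros t. cbn [Re RtoC]. rewrite !mvR_zeroM.
        unfold mvR. rewrite !Rsum_0' by (intros; ring). ring.
    - eapply rluc_ev; [|eapply rluc_extG; [|exact H2]].
      + intros. exists 1. split; [lra|]. intros. apply (Theta_zero d a b N g eps (fun s _ => h s) (fun _ _ => 0) t 0).
      + intros t. reflexivity. }
  pose proof (G (fun _ _ => 1) (fun _ _ => 0) (fun _ => 1) (fun _ => 0) (smooth_const 1)
     ltac:(intros; apply derivable_pt_lim_const) eq_refl eq_refl) as H1.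
  pose proof (G (fun s _ => s) (fun _ _ => 1) (fun s => s) (fun _ => 1) smooth_id
     ltac:(intros; apply derivable_pt_lim_id) eq_refl eq_refl) as H2.
  apply (e_from a b N g (-1) Hab ltac:(lra)).
  apply (luc_boxmC_iff a b N g (fun _ => 1)) in H1. apply (luc_boxmC_iff a b N g (fun s => s)) in H2.
  destruct H1 as [A1 B1], H2 as [A2 B2].
  intros rho sigma [[-> ->]|[-> ->]]; split.
  + eapply rluc_extG; [|exact A1]. intros; simpl; ring.
  + eapply rluc_extG; [|exact A2]. intros; simpl; ring.
  + eapply rluc_extG; [|exact B1]. intros; simpl; ring.
  + eapply rluc_extG; [|exact B2]. intros; simpl; ring.
Qed.
Lemma rluc_mono a b F G F' G' : rluc a b F G -> (forall e t, F e t = F' e t) -> (forall t, G t = G' t) ->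
  rluc a b F' G'.
Proof. intros H E1 E2. eapply rluc_extG; [exact E2|]. eapply rluc_ev; [|exact H].
  intros; exists 1; split; [lra|]; intros; auto. Qed.

Lemma e_to_a d a b N g : prop_e N g -> prop_a d a b N g.
Proof. intros He P Q Rm P' Rm' J1 J2 J1' x x1 x2 HPm HJ i Hi.
  pose proof He as He'. apply e_iff in He'. destruct He' as [E1 [E2 [E3 E4]]].
  assert (Hc : Rabs (-1) = 1) by (unfold Rabs; destruct Rcase_abs; lra).
  assert (Hc1 : Rabs 1 = 1) by apply Rabs_R1.
  assert (HB : forall j, (j < d)%nat -> (forall t, derivable_pt_lim (fun t => P t i j) t (P' t i j)) /\
     continuity (fun t => P' t i j) /\ (forall t, derivable_pt_lim (fun t => x t j) t (x1 t j)) /\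
     (forall t, derivable_pt_lim (fun t => x1 t j) t (x2 t j)) /\ continuity (fun t => x2 t j)).
  { intros j Hj. destruct (HPm i j Hi Hj) as [sP [sQ [sR [dP [dR _]]]]].
    destruct (HJ j Hj) as [_ [_ [_ [c1 [c2 c3]]]]].
    split; [exact dP|split; [apply (smooth_cont' _ _ sP dP)|split; [exact c1|split; [exact c2|exact c3]]]]. }
  assert (HR : forall j, (j < d)%nat -> (forall t, derivable_pt_lim (fun t => Rm t i j) t (Rm' t i j)) /\
     continuity (fun t => Rm t i j) /\ continuity (fun t => Rm' t i j) /\
     (forall t, derivable_pt_lim (fun t => x t j) t (x1 t j)) /\ continuity (fun t => x t j) /\
     continuity (fun t => x1 t j)).
  { intros j Hj. destruct (HPm i j Hi Hj) as [sP [sQ [sR [dP [dR _]]]]].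
    destruct (HJ j Hj) as [_ [_ [_ [c1 [c2 c3]]]]].
    split; [exact dR|split; [apply (smooth_cont _ sR)|split; [apply (smooth_cont' _ _ sR dR)|split; [exact c1|split]]]].
    apply (deriv_cont _ _ c1). apply (deriv_cont _ _ c2). }
  destruct (HJ i Hi) as [sJ1 [_ [dJ1 _]]].
  assert (cJ1 : continuity (fun s => J1' s i)) by apply (smooth_cont' _ _ sJ1 dJ1).
  set (RX := fun s => mvR d (Rm s) (x s) i).
  set (RX' := fun s => Rsum d (fun j => Rm' s i j * x s j + Rm s i j * x1 s j)).
  assert (dRX : forall t, derivable_pt_lim RX t (RX' t)).
  { intros t. unfold RX, RX', mvR.
    apply (deriv_Rsum d (fun j s => Rm s i j * x s j) (fun j s => Rm' s i j * x s j + Rm s i j * x1 s j)).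
    intros j Hj. destruct (HR j Hj) as [D1 [_ [_ [D2 _]]]]. apply deriv_mult; auto. }
  assert (cRX : continuity RX').
  { unfold RX'. apply (cont_Rsum d (fun j s => Rm' s i j * x s j + Rm s i j * x1 s j)).
    intros j Hj. destruct (HR j Hj) as [_ [C1 [C2 [_ [C3 C4]]]]].
    apply cont_plus; apply cont_mult; auto. }
  assert (T3 : forall rho sigma, S0 N rho = 0 -> S1 N rho = sigma ->
     rluc a b (fun e t => Rsum d (fun j => Rm t i j * opR N rho 1 e (fun u => x u j) t))
              (fun t => Rsum d (fun j => Rm t i j * (1 * sigma * x1 t j)))).
  { intros rho sigma A B. apply (rluc_Rsum a b d (fun j e t => Rm t i j * opR N rho 1 e (fun u => x u j) t)
       (fun j t => Rm t i j * (1 * sigma * x1 t j))).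
    intros j Hj. destruct (HR j Hj) as [_ [C1 [_ [D2 [_ C4]]]]].
    apply (rluc_mulb a b (fun t => Rm t i j)); auto. apply conv_h; auto. }
  apply luc_of_parts.
  - pose proof (rluc_plus _ _ _ _ _ _ (rluc_plus _ _ _ _ _ _ (rluc_plus _ _ _ _ _ _ (rluc_plus _ _ _ _ _ _
      (rluc_plus _ _ _ _ _ _
        (rluc_minus _ _ _ _ _ _
           (box2 a b d N (ReG g) 1 (ReG g) 1 (fun j t => P t i j) (fun j t => P' t i j)
               (fun j t => x t j) (fun j t => x1 t j) (fun j t => x2 t j) E1 E3 E1 E3 HB)
           (box2 a b d N (ImG g) 0 (ImG g) 0 (fun j t => P t i j) (fun j t => P' t i j)
               (fun j t => x t j) (fun j t => x1 t j) (fun j t => x2 t j) E2 E4 E2 E4 HB))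
        (rluc_scal a b (-1) _ _ (conv_h a b N (ReG g) (-1) 1 RX RX' Hc E1 E3 dRX cRX)))
      (T3 (ReG g) 1 E1 E3))
      (rluc_const a b (fun e t => mvR d (Q t) (x t) i) (fun t => mvR d (Q t) (x t) i) (fun _ _ => eq_refl)))
      (conv_h a b N (ReG g) (-1) 1 (fun s => J1 s i) (fun s => J1' s i) Hc E1 E3 dJ1 cJ1))
      (rluc_const a b (fun e t => J2 t i) (fun t => J2 t i) (fun _ _ => eq_refl))) as TR.
    eapply rluc_ev.
    2:{ eapply rluc_mono. exact TR. intros e t; reflexivity. intros t.
        cbv beta. cbn [Re RtoC]. unfold RX'. unfold mvR.
        rewrite (Rsum_ext d (fun j => (- P' t i j + 2 * Rm t i j) * x1 t j)
           (fun j => -1 * (P' t i j * x1 t j) + 2 * (Rm t i j * x1 t j))) by (intros; ring).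
        rewrite (Rsum_ext d (fun j => (Rm' t i j + Q t i j) * x t j)
           (fun j => 1 * (Rm' t i j * x t j) + 1 * (Q t i j * x t j))) by (intros; ring).
        rewrite (Rsum_ext d (fun j => Rm' t i j * x t j + Rm t i j * x1 t j)
           (fun j => 1 * (Rm' t i j * x t j) + 1 * (Rm t i j * x1 t j))) by (intros; ring).
        rewrite (Rsum_ext d (fun j => Rm t i j * (1 * 1 * x1 t j))
           (fun j => 1 * (Rm t i j * x1 t j))) by (intros; ring).
        rewrite !Rsum_lin2, !Rsum_scal. ring. }
    intros delta Hd. destruct (small_eps N (delta / 2)) as [e1 [He1 P1]]; [lra|].
    exists e1; split; auto. intros eps t Heps Ht.
    rewrite (Theta_Re_in d a b N g eps P Q Rm J1 J2 x t i delta) by (auto; lra).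
    cbv beta. unfold FP, RX. ring.
  - pose proof (rluc_plus _ _ _ _ _ _ (rluc_plus _ _ _ _ _ _ (rluc_plus _ _ _ _ _ _
        (rluc_plus _ _ _ _ _ _
           (box2 a b d N (ReG g) 1 (ImG g) 0 (fun j t => P t i j) (fun j t => P' t i j)
               (fun j t => x t j) (fun j t => x1 t j) (fun j t => x2 t j) E1 E3 E2 E4 HB)
           (box2 a b d N (ImG g) 0 (ReG g) 1 (fun j t => P t i j) (fun j t => P' t i j)
               (fun j t => x t j) (fun j t => x1 t j) (fun j t => x2 t j) E2 E4 E1 E3 HB))
        (rluc_scal a b (-1) _ _ (conv_h a b N (ImG g) (-1) 0 RX RX' Hc E2 E4 dRX cRX)))
      (T3 (ImG g) 0 E2 E4))
      (conv_h a b N (ImG g) (-1) 0 (fun s => J1 s i) (fun s => J1' s i) Hc E2 E4 dJ1 cJ1)) as TR.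
    eapply rluc_ev.
    2:{ eapply rluc_mono. exact TR. intros e t; reflexivity. intros t.
        cbv beta. cbn [Im RtoC].
        rewrite (Rsum_0' d (fun j => Rm t i j * (1 * 0 * x1 t j))) by (intros; ring). ring. }
    intros delta Hd. destruct (small_eps N (delta / 2)) as [e1 [He1 P1]]; [lra|].
    exists e1; split; auto. intros eps t Heps Ht.
    rewrite (Theta_Im_in d a b N g eps P Q Rm J1 J2 x t i delta) by (auto; lra).
    cbv beta. unfold FP, RX. ring.
Qed.

Lemma a_iff a b d N g : a < b -> (1 <= d)%nat -> prop_a d a b N g <-> prop_e N g.
Proof. intros Hab Hd. split. apply a_to_e; auto. apply e_to_a. Qed.

Theorem mainTheorem5 (a b : R) (d N : nat) (g : Z -> Cplx) :
  a < b -> (1 <= d)%nat -> (1 <= N)%nat ->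
  (prop_a d a b N g <-> prop_e N g) /\
  (prop_b d a b N g <-> prop_e N g) /\
  (prop_c d a b N g <-> prop_e N g) /\
  (prop_d a b N g <-> prop_e N g) /\
  (prop_f d a b N g <-> prop_e N g).
Proof. intros Hab Hd HN. split; [apply a_iff; auto|]. split; [apply b_iff; auto|].
  split; [apply c_iff; auto|]. split; [apply d_iff; auto|]. apply f_iff; auto. Qed.
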